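(* Let $N\geq1$ be an integer, $t\in\mathbb R$ fixed, and $s\geq0$. Define $$\mathbf B_2^Q(u,v):=\begin{pmatrix}B_2(\mathcal Pu,\mathcal Qv)+B_2(\mathcal Qu,v)\\ B_2(\mathcal Pu,\mathcal Qv)+B_2(\mathcal Qu,v)\end{pmatrix}-\begin{pmatrix}B_2(\mathcal Pu,\mathcal Qu)+B_2(\mathcal Qu,u)\\ B_2(\mathcal Pv,\mathcal Qv)+B_2(\mathcal Qv,v)\end{pmatrix}.$$ Then $\mathbf B_2^Q$ maps $(\dot H^s)^2$ into $(\dot H^s)^2$ and there is a constant $C(s)$, independent of $N$ and $t$, such that for all $(u,v),(\tilde u,\tilde v)\in(\dot H^s)^2$, $$\|\mathbf B_2^Q(u,v)\|_{(\dot H^s)^2}\leq C(s)\frac1N\|(u,v)\|^2_{(\dot H^s)^2},$$ $$\|\mathbf B_2^Q(u,v)-\mathbf B_2^Q(\tilde u,\tilde v)\|_{(\dot H^s)^2}\leq C(s)\frac1N\|(u,v)-(\tilde u,\tilde v)\|_{(\dot H^s)^2}\big(\|(u,v)\|_{(\dot H^s)^2}+\|(\tilde u,\tilde v)\|_{(\dot H^s)^2}\big).$$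
   Context: $\mathbb Z_0=\mathbb Z\setminus\{0\}$. Mean-zero real-valued functions on $\mathbb T=[0,2\pi]$ are identified with their Fourier coefficients $(u_k)_{k\in\mathbb Z_0}$, $\overline{u_k}=u_{-k}$. For $s\in\mathbb R$, $\|u\|_{\dot H^s}^2=\sum_{k\in\mathbb Z_0}|k|^{2s}|u_k|^2$, $\dot H^s$ the space of such $u$ with finite norm, $\|(u,v)\|^2_{(\dot H^s)^2}=\|u\|^2_{\dot H^s}+\|v\|^2_{\dot H^s}$. $\mathcal P$ is the projection onto modes $|k|\leq N$: $(\mathcal Pu)_k=u_k$ if $|k|\leq N$, $0$ otherwise; $\mathcal Q=I-\mathcal P$ is the projection onto modes $|k|>N$. The bilinear operator $B_2$ is defined by $B_2(\phi,\psi)_k:=\frac16\sum_{k_1+k_2=k}\frac{e^{3ikk_1k_2t}}{k_1k_2}\phi_{k_1}\psi_{k_2}$, $k\in\mathbb Z_0$ (sum over $k_1,k_2\in\mathbb Z_0$). *)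

(* Defs.v *)
From Stdlib Require Import Reals ZArith.
From Coquelicot Require Import Coquelicot.
Open Scope R_scope.

(* Fourier coefficients of a mean-zero function on T, indexed by Z
   (the value at index 0 is required to be 0: mean zero). *)
Definition coeffs := Z -> C.

(* Sum over Z \ {0} of a complex family, pairing the modes n and -n
   (n >= 1); used only for absolutely summable families. *)
Definition zsum (g : Z -> C) : C :=
  (Series (fun n : nat => fst (g (Z.of_nat (S n))) + fst (g (- Z.of_nat (S n))%Z)),
   Series (fun n : nat => snd (g (Z.of_nat (S n))) + snd (g (- Z.of_nat (S n))%Z))).

Definition Hs_term (s : R) (u : coeffs) (n : nat) : R :=
  Rpower (INR (S n)) (2 * s) *
    (Cmod (u (Z.of_nat (S n))) ^ 2 + Cmod (u (- Z.of_nat (S n))%Z) ^ 2).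

Definition Hs_norm2 (s : R) (u : coeffs) : R := Series (Hs_term s u).
Definition Hs_norm (s : R) (u : coeffs) : R := sqrt (Hs_norm2 s u).

(* membership in \dot H^s: mean zero, real-valued (conj u_k = u_{-k}),
   and finite norm *)
Definition in_Hs (s : R) (u : coeffs) : Prop :=
  u 0%Z = 0%C /\ (forall k : Z, Cconj (u k) = u (- k)%Z) /\ ex_series (Hs_term s u).

Definition Hs2_norm (s : R) (u v : coeffs) : R :=
  sqrt (Hs_norm2 s u + Hs_norm2 s v).

Definition projP (N : nat) (u : coeffs) : coeffs :=
  fun k => if (Z.abs k <=? Z.of_nat N)%Z then u k else 0%C.
Definition projQ (N : nat) (u : coeffs) : coeffs :=
  fun k => if (Z.abs k <=? Z.of_nat N)%Z then 0%C else u k.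

Definition cexpi (theta : R) : C := (cos theta, sin theta).

(* B_2(phi,psi)_k = 1/6 sum_{k1+k2=k, k1,k2 in Z0} e^{3 i k k1 k2 t}/(k1 k2) phi_{k1} psi_{k2},
   for k in Z0; set to 0 at k = 0 (mean-zero convention). *)
Definition B2 (t : R) (phi psi : coeffs) : coeffs :=
  fun k =>
    if (k =? 0)%Z then 0%C else
    Cmult (RtoC (1 / 6))
      (zsum (fun k1 =>
         if (k1 =? k)%Z then 0%C else
         let k2 := (k - k1)%Z in
         Cmult (Cmult (cexpi (3 * IZR k * IZR k1 * IZR k2 * t))
                      (RtoC (/ (IZR k1 * IZR k2))))
               (Cmult (phi k1) (psi k2)))).

Definition caddf (f g : coeffs) : coeffs := fun k => Cplus (f k) (g k).
Definition csubf (f g : coeffs) : coeffs := fun k => Cminus (f k) (g k).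

Definition B2Q1 (N : nat) (t : R) (u v : coeffs) : coeffs :=
  csubf (caddf (B2 t (projP N u) (projQ N v)) (B2 t (projQ N u) v))
        (caddf (B2 t (projP N u) (projQ N u)) (B2 t (projQ N u) u)).
Definition B2Q2 (N : nat) (t : R) (u v : coeffs) : coeffs :=
  csubf (caddf (B2 t (projP N u) (projQ N v)) (B2 t (projQ N u) v))
        (caddf (B2 t (projP N v) (projQ N v)) (B2 t (projQ N v) v)).

(* Main.v *)
Require Import Defs.
From Stdlib Require Import Reals ZArith Lia Lra Psatz.
From Coquelicot Require Import Coquelicot.
Open Scope R_scope.


Lemma sum_n_nonneg (a : nat -> R) : (forall n, 0 <= a n) -> forall M, 0 <= sum_n a M.
Proof. intros Ha M; induction M. rewrite sum_O; auto. rewrite sum_Sn. unfold plus; simpl. specialize (Ha (S M)). lra. Qed.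

Lemma ser_partial_le (a : nat -> R) : (forall n, 0 <= a n) -> ex_series a ->
  forall M, sum_n a M <= Series a.
Proof.
  intros Ha He M. apply is_lim_seq_incr_compare.
  - apply (Series_correct a He).
  - intro n. rewrite sum_Sn. unfold plus; simpl. specialize (Ha (S n)). lra.
Qed.

Lemma ser_bounded (a : nat -> R) (B : R) : (forall n, 0 <= a n) ->
  (forall M, sum_n a M <= B) -> ex_series a /\ Series a <= B.
Proof.
  intros Ha Hb.
  assert (Hinc : forall n, sum_n a n <= sum_n a (S n)).
  { intro n. rewrite sum_Sn. unfold plus; simpl. specialize (Ha (S n)). lra. }
  destruct (ex_finite_lim_seq_incr _ B Hinc Hb) as [l Hl].
  assert (He : ex_series a). { exists l. exact Hl. }
  split; auto.
  assert (Hs : Series a = l). { apply is_series_unique. exact Hl. }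
  rewrite Hs.
  assert (Hle := Lim_seq_le_loc (sum_n a) (fun _ => B)).
  rewrite Lim_seq_const in Hle.
  rewrite (is_lim_seq_unique _ _ Hl) in Hle. simpl in Hle. apply Hle.
  exists 0%nat. intros; auto.
Qed.

Lemma ser_le_gen (a b : nat -> R) : (forall n, Rabs (a n) <= b n) -> ex_series b ->
  ex_series a /\ Rabs (Series a) <= Series b.
Proof.
  intros H Hb.
  assert (Ha' : ex_series (fun n => Rabs (a n))).
  { apply (@ex_series_le R_AbsRing R_CompleteNormedModule _ b); auto. intro n. change (Rabs (Rabs (a n)) <= b n). rewrite Rabs_Rabsolu. apply H. }
  split. apply ex_series_Rabs; auto.
  eapply Rle_trans. apply Series_Rabs; auto.
  apply Series_le; auto. intro n; split; [apply Rabs_pos| apply H].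
Qed.

Lemma ser_nonneg (a : nat -> R) : (forall n, 0 <= a n) -> 0 <= Series a.
Proof.
  intros H. unfold Series. 
  assert (Hle := Lim_seq_le_loc (fun _ => 0) (sum_n a)).
  rewrite Lim_seq_const in Hle.
  destruct (Lim_seq (sum_n a)) eqn:E; simpl; try lra.
  simpl in Hle. apply Hle. exists 0%nat. intros; apply sum_n_nonneg; auto.
Qed.

Definition pt (h : Z -> R) (n : nat) : R := h (Z.of_nat (S n)) + h (- Z.of_nat (S n))%Z.

Fixpoint IS (g : Z -> R) (a : Z) (n : nat) : R :=
  match n with O => 0 | S m => IS g a m + g (a + Z.of_nat m)%Z end.

Lemma IS_app g a n m : IS g a (n + m) = IS g a n + IS g (a + Z.of_nat n) m.
Proof.
  induction m. simpl. rewrite Nat.add_0_r. lra.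
  rewrite Nat.add_succ_r. simpl. rewrite IHm.
  replace (a + Z.of_nat (n + m))%Z with (a + Z.of_nat n + Z.of_nat m)%Z by lia. lra.
Qed.

Lemma IS_nonneg g a n : (forall j, 0 <= g j) -> 0 <= IS g a n.
Proof. intros H; induction n; simpl; [lra|]. specialize (H (a + Z.of_nat n)%Z). lra. Qed.

Lemma IS_mono g a b n m : (forall j, 0 <= g j) -> (b <= a)%Z -> (a + Z.of_nat n <= b + Z.of_nat m)%Z ->
  IS g a n <= IS g b m.
Proof.
  intros Hg H1 H2.
  set (p := Z.to_nat (a - b)).
  assert (Hm : m = (p + (n + (m - p - n)))%nat) by (unfold p; lia).
  rewrite Hm, IS_app, IS_app.
  replace (b + Z.of_nat p)%Z with a by (unfold p; lia).
  pose proof (IS_nonneg g b p Hg). pose proof (IS_nonneg g (a + Z.of_nat n) (m-p-n) Hg). lra.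
Qed.

Lemma IS_1 g a : IS g a 1 = g a.
Proof. simpl. rewrite Z.add_0_r. lra. Qed.

Lemma IS_rep g c M :
  sum_n (fun n => g (c + Z.of_nat (S n))%Z + g (c - Z.of_nat (S n))%Z) M + g c
  = IS g (c - Z.of_nat (S M))%Z (2*M+3).
Proof.
  induction M.
  - rewrite sum_O. simpl.
    replace (c - 1 + 0)%Z with (c - 1)%Z by lia.
    replace (c - 1 + 1)%Z with c by lia.
    replace (c - 1 + 2)%Z with (c + 1)%Z by lia. lra.
  - rewrite sum_Sn. unfold plus; simpl (AbelianMonoid.plus _ _).
    replace (2 * S M + 3)%nat with (1 + ((2*M+3) + 1))%nat by lia.
    rewrite IS_app, IS_app, IS_1, IS_1.
    replace (c - Z.of_nat (S (S M)) + Z.of_nat 1)%Z with (c - Z.of_nat (S M))%Z by lia.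
    rewrite <- IHM.
    replace (c - Z.of_nat (S M) + Z.of_nat (2 * M + 3))%Z with (c + Z.of_nat (S (S M)))%Z by lia.
    lra.
Qed.

Lemma shift_le (g : Z -> R) (c : Z) (M : nat) :
  (forall j, 0 <= g j) -> g 0%Z = 0 -> ex_series (pt g) ->
  sum_n (fun n => g (c + Z.of_nat (S n))%Z + g (c - Z.of_nat (S n))%Z) M <= Series (pt g).
Proof.
  intros Hg H0 He.
  set (R := (S M + Z.abs_nat c)%nat).
  assert (H1 := IS_rep g c M).
  assert (H2 := IS_rep g 0 (R - 1)).
  assert (Hm : IS g (c - Z.of_nat (S M))%Z (2*M+3) <= IS g (0 - Z.of_nat (S (R-1)))%Z (2*(R-1)+3)).
  { apply IS_mono; auto; unfold R; lia. }
  assert (Hp : sum_n (fun n => g (0 + Z.of_nat (S n))%Z + g (0 - Z.of_nat (S n))%Z) (R-1) = sum_n (pt g) (R-1)).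
  { apply sum_n_ext. intro n. unfold pt. f_equal; f_equal; lia. }
  rewrite Hp, H0 in H2.
  pose proof (ser_partial_le (pt g) (fun n => Rplus_le_le_0_compat _ _ (Hg _) (Hg _)) He (R-1)).
  specialize (Hg c). lra.
Qed.

Lemma term_le (g : Z -> R) (j : Z) :
  (forall j, 0 <= g j) -> g 0%Z = 0 -> ex_series (pt g) -> g j <= Series (pt g).
Proof.
  intros Hg H0 He.
  pose proof (shift_le g j 0 Hg H0 He). rewrite sum_O in H.
  pose proof (Hg (j + 1)%Z). pose proof (Hg (j-1)%Z).
  pose proof (shift_le g 0 (Z.abs_nat j) Hg H0 He).
  assert (Hs: forall m, sum_n (fun n => g (0 + Z.of_nat (S n))%Z + g (0 - Z.of_nat (S n))%Z) m = sum_n (pt g) m).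
  { intro m. apply sum_n_ext. intro n. unfold pt. f_equal; f_equal; lia. }
  destruct (Z.eq_dec j 0) as [->|Hj]. rewrite H0. apply ser_nonneg. intro; unfold pt; pose proof (Hg (Z.of_nat (S n))); pose proof (Hg (- Z.of_nat (S n))%Z); lra.
  set (m := (Z.abs_nat j - 1)%nat).
  assert (Hle: g j <= sum_n (fun n => g (0 + Z.of_nat (S n))%Z + g (0 - Z.of_nat (S n))%Z) m).
  { clear -Hg Hj. unfold m. 
    assert (Hgen : forall m, (Z.abs_nat j <= S m)%nat -> g j <= sum_n (fun n => g (0 + Z.of_nat (S n))%Z + g (0 - Z.of_nat (S n))%Z) m).
    { induction m0; intros Hm.
      - rewrite sum_O. assert (j = 1 \/ j = -1)%Z as [->| ->] by lia; simpl; pose proof (Hg 1%Z); pose proof (Hg (-1)%Z); lra.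
      - rewrite sum_Sn. unfold plus; simpl (AbelianMonoid.plus _ _).
        destruct (Nat.eq_dec (Z.abs_nat j) (S (S m0))) as [E|E].
        + assert (Hs0 := sum_n_nonneg (fun n => g (0 + Z.of_nat (S n))%Z + g (0 - Z.of_nat (S n))%Z) (fun n => Rplus_le_le_0_compat _ _ (Hg _) (Hg _)) m0).
          assert (j = 0 + Z.of_nat (S (S m0)) \/ j = 0 - Z.of_nat (S (S m0)))%Z as [-> | ->] by lia;
          pose proof (Hg (0 + Z.of_nat (S (S m0)))%Z); pose proof (Hg (0 - Z.of_nat (S (S m0)))%Z); lra.
        + pose proof (IHm0 ltac:(lia)). pose proof (Hg (0 + Z.of_nat (S (S m0)))%Z); pose proof (Hg (0 - Z.of_nat (S (S m0)))%Z); lra. }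
    apply Hgen. lia. }
  rewrite Hs in Hle. pose proof (ser_partial_le (pt g) (fun n => Rplus_le_le_0_compat _ _ (Hg _) (Hg _)) He m). lra.
Qed.

Lemma exs_plus (a b : nat -> R) : ex_series a -> ex_series b -> ex_series (fun n => a n + b n).
Proof. intros. apply (@ex_series_plus R_AbsRing R_NormedModule); auto. Qed.

Lemma exs_scal (c : R) (a : nat -> R) : ex_series a -> ex_series (fun n => c * a n).
Proof. intros. apply (@ex_series_scal_l R_AbsRing R_NormedModule); auto. Qed.

Lemma exs_le (a b : nat -> R) : (forall n, 0 <= a n <= b n) -> ex_series b -> ex_series a.
Proof. intros H Hb. apply (ser_le_gen a b); auto. intro n. rewrite Rabs_pos_eq; apply H. Qed.

Lemma exs_ext (a b : nat -> R) : (forall n, a n = b n) -> ex_series a -> ex_series b.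
Proof. intros H [l Hl]. exists l. apply (is_series_ext a); auto. Qed.

Lemma sum_series (F : nat -> nat -> R) M : (forall n, ex_series (F n)) ->
  ex_series (fun m => sum_n (fun n => F n m) M) /\
  sum_n (fun n => Series (F n)) M = Series (fun m => sum_n (fun n => F n m) M).
Proof.
  intros H. induction M.
  - rewrite sum_O. split. apply (exs_ext (F 0%nat)); auto. intro; rewrite sum_O; auto.
    apply Series_ext. intro; rewrite sum_O; auto.
  - destruct IHM as [He Hs]. rewrite sum_Sn.
    assert (Hx : forall m, sum_n (fun n => F n m) (S M) = sum_n (fun n => F n m) M + F (S M) m).
    { intro m. rewrite sum_Sn. auto. }
    split. apply (exs_ext (fun m => sum_n (fun n => F n m) M + F (S M) m)). intro; rewrite Hx; auto.
    apply exs_plus; auto.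
    rewrite (Series_ext _ _ Hx). rewrite Series_plus; auto. rewrite Hs. auto.
Qed.

Lemma amgm_real (P X Y : R) : 0 <= P -> 0 <= X -> 0 <= Y ->
  (forall l, 0 < l -> P <= (l * X + Y / l) / 2) -> P ^ 2 <= X * Y.
Proof.
  intros HP HX HY H.
  destruct (Req_dec X 0) as [HX0|HX0].
  - subst. destruct (Req_dec P 0) as [->|HP0]; [lra|].
    assert (HPp : 0 < P) by lra.
    specialize (H ((Y+1)/P) ltac:(apply Rdiv_lt_0_compat; lra)).
    replace (((Y + 1) / P * 0 + Y / ((Y + 1) / P)) / 2) with (Y * P / (2*(Y+1))) in H by (field; lra).
    apply Rmult_le_compat_r with (r := 2*(Y+1)) in H; [|lra].
    replace (Y * P / (2 * (Y + 1)) * (2 * (Y + 1))) with (Y*P) in H by (field; lra). nra.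
  - destruct (Req_dec Y 0) as [HY0|HY0].
    + subst. destruct (Req_dec P 0) as [->|HP0]; [lra|].
      assert (HPp : 0 < P) by lra.
      specialize (H (P/(X+1)) ltac:(apply Rdiv_lt_0_compat; lra)).
      replace ((P / (X + 1) * X + 0 / (P / (X + 1))) / 2) with (P * X / (2*(X+1))) in H by (field; lra).
      apply Rmult_le_compat_r with (r := 2*(X+1)) in H; [|lra].
      replace (P * X / (2 * (X + 1)) * (2 * (X + 1))) with (P*X) in H by (field; lra). nra.
    + assert (sX : 0 < sqrt X) by (apply sqrt_lt_R0; lra).
      assert (sY : 0 < sqrt Y) by (apply sqrt_lt_R0; lra).
      specialize (H (sqrt Y / sqrt X) ltac:(apply Rdiv_lt_0_compat; lra)).
      pose proof (sqrt_sqrt X HX). pose proof (sqrt_sqrt Y HY).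
      replace ((sqrt Y / sqrt X * X + Y / (sqrt Y / sqrt X)) / 2) with (sqrt X * sqrt Y) in H.
      2:{ remember (sqrt X) as a. remember (sqrt Y) as b. rewrite <- H0, <- H1. field. lra. }
      remember (sqrt X) as a. remember (sqrt Y) as b. rewrite <- H0, <- H1. nra.
Qed.

Definition sq (h : Z -> R) : Z -> R := fun j => h j ^ 2.

Lemma pt_nonneg h : (forall j, 0 <= h j) -> forall n, 0 <= pt h n.
Proof. intros H n. unfold pt. pose proof (H (Z.of_nat (S n))). pose proof (H (- Z.of_nat (S n))%Z). lra. Qed.

Lemma CS_Z (x y : Z -> R) : (forall j, 0 <= x j) -> (forall j, 0 <= y j) ->
  ex_series (pt (sq x)) -> ex_series (pt (sq y)) ->
  ex_series (pt (fun j => x j * y j)) /\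
  Series (pt (fun j => x j * y j)) ^ 2 <= Series (pt (sq x)) * Series (pt (sq y)).
Proof.
  intros Hx Hy Ex Ey.
  assert (Hn : forall n, 0 <= pt (fun j => x j * y j) n).
  { apply pt_nonneg. intro j. apply Rmult_le_pos; auto. }
  assert (Hab : forall l, 0 < l -> forall n, pt (fun j => x j * y j) n <= (l * pt (sq x) n + / l * pt (sq y) n) / 2).
  { intros l Hl n. unfold pt, sq.
    set (a := x (Z.of_nat (S n))). set (b := y (Z.of_nat (S n))).
    set (c := x (- Z.of_nat (S n))%Z). set (d := y (- Z.of_nat (S n))%Z).
    assert (forall u v, u * v <= (l * u^2 + / l * v^2)/2).
    { intros u v. assert (0 <= (l*u - v)^2 / l) by (unfold Rdiv; apply Rmult_le_pos; [apply pow2_ge_0 | left; apply Rinv_0_lt_compat; lra]).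
      replace ((l * u - v) ^ 2 / l) with (l * u^2 + / l * v^2 - 2 * (u * v)) in H by (field; lra). lra. }
    pose proof (H a b). pose proof (H c d). lra. }
  assert (Ee : ex_series (pt (fun j => x j * y j))).
  { apply (exs_le _ (fun n => (1 * pt (sq x) n + / 1 * pt (sq y) n) / 2)).
    intro n; split; auto. apply Hab; lra.
    apply (exs_ext (fun n => /2 * (1 * pt (sq x) n) + /2 * (/1 * pt (sq y) n))). intro; field.
    apply exs_plus; apply exs_scal; apply exs_scal; auto. }
  split; auto.
  apply amgm_real.
  - apply ser_nonneg; auto.
  - apply ser_nonneg. apply pt_nonneg. intro; unfold sq; apply pow2_ge_0.
  - apply ser_nonneg. apply pt_nonneg. intro; unfold sq; apply pow2_ge_0.
  - intros l Hl. 
    eapply Rle_trans. apply Series_le with (b := fun n => /2 * (l * pt (sq x) n) + /2 * (/ l * pt (sq y) n)).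
    intro n; split; auto. pose proof (Hab l Hl n). lra.
    apply exs_plus; apply exs_scal; apply exs_scal; auto.
    rewrite Series_plus, !Series_scal_l. unfold Rdiv. lra.
    apply exs_scal; apply exs_scal; auto. apply exs_scal; apply exs_scal; auto.
Qed.

Lemma dconv (f g : Z -> R) :
  (forall j, 0 <= f j) -> (forall j, 0 <= g j) -> f 0%Z = 0 -> g 0%Z = 0 ->
  ex_series (pt f) -> ex_series (pt g) ->
  (forall k, ex_series (pt (fun k1 => f k1 * g (k - k1)%Z))) /\
  ex_series (pt (fun k => Series (pt (fun k1 => f k1 * g (k - k1)%Z)))) /\
  Series (pt (fun k => Series (pt (fun k1 => f k1 * g (k - k1)%Z)))) <= Series (pt f) * Series (pt g).
Proof.
  intros Hf Hg Hf0 Hg0 Ef Eg.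
  set (G := Series (pt g)). set (F := Series (pt f)).
  assert (HG : forall j, g j <= G) by (intro j; apply term_le; auto).
  assert (Ein : forall k, ex_series (pt (fun k1 => f k1 * g (k - k1)%Z))).
  { intro k. apply (exs_le _ (fun n => G * pt f n)); [|apply exs_scal; auto].
    intro n. unfold pt. pose proof (Hf (Z.of_nat (S n))). pose proof (Hf (- Z.of_nat (S n))%Z).
    pose proof (Hg (k - Z.of_nat (S n))%Z). pose proof (Hg (k - - Z.of_nat (S n))%Z).
    pose proof (HG (k - Z.of_nat (S n))%Z). pose proof (HG (k - - Z.of_nat (S n))%Z).
    split; nra. }
  set (H := fun n m => pt (fun k1 => f k1 * g (Z.of_nat (S n) - k1)%Z) m + pt (fun k1 => f k1 * g (- Z.of_nat (S n) - k1)%Z) m).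
  assert (EH : forall n, ex_series (H n)) by (intro n; apply exs_plus; auto).
  assert (Hpt : forall n, pt (fun k => Series (pt (fun k1 => f k1 * g (k - k1)%Z))) n = Series (H n)).
  { intro n. unfold pt at 1. unfold H. rewrite Series_plus; auto. }
  assert (Hnn : forall n, 0 <= pt (fun k => Series (pt (fun k1 => f k1 * g (k - k1)%Z))) n).
  { apply pt_nonneg. intro k. apply ser_nonneg. apply pt_nonneg. intro; apply Rmult_le_pos; auto. }
  assert (Hb : forall M, sum_n (pt (fun k => Series (pt (fun k1 => f k1 * g (k - k1)%Z)))) M <= F * G).
  { intro M. rewrite (sum_n_ext _ _ _ Hpt).
    destruct (sum_series H M EH) as [E1 E2]. rewrite E2.
    replace (F * G) with (Series (fun m => G * pt f m)) by (rewrite Series_scal_l; unfold F; lra).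
    apply Series_le; [|apply exs_scal; auto].
    intro m. split.
    - apply sum_n_nonneg. intro n. unfold H. apply Rplus_le_le_0_compat; apply pt_nonneg; intro; apply Rmult_le_pos; auto.
    - set (a := Z.of_nat (S m)).
      assert (Heq : forall n, H n m = f a * (g (- a + Z.of_nat (S n))%Z + g (- a - Z.of_nat (S n))%Z)
                                    + f (- a)%Z * (g (a + Z.of_nat (S n))%Z + g (a - Z.of_nat (S n))%Z)).
      { intro n. unfold H, pt. fold a.
        replace (Z.of_nat (S n) - a)%Z with (- a + Z.of_nat (S n))%Z by lia.
        replace (Z.of_nat (S n) - - a)%Z with (a + Z.of_nat (S n))%Z by lia.
        replace (- Z.of_nat (S n) - a)%Z with (- a - Z.of_nat (S n))%Z by lia.
        replace (- Z.of_nat (S n) - - a)%Z with (a - Z.of_nat (S n))%Z by lia. ring. }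
      rewrite (sum_n_ext _ _ _ Heq).
      rewrite (sum_n_plus (G := R_AbelianMonoid)).
      rewrite (sum_n_mult_l (K := R_Ring)). rewrite (sum_n_mult_l (K := R_Ring)).
      apply Rle_trans with (f a * G + f (-a)%Z * G).
      apply Rplus_le_compat; apply Rmult_le_compat_l; auto; apply shift_le; auto.
      unfold pt. fold a. lra. }
  destruct (ser_bounded _ _ Hnn Hb) as [E1 E2]. repeat split; auto.
Qed.

Definition W (s : R) (k : Z) : R := Rpower (IZR (Z.abs k)) s.
Definition ker (x y : Z) : R := Rabs (/ (IZR x * IZR y)).
Definition Mab (a b : Z -> R) (k : Z) : R :=
  Series (pt (fun k1 => a k1 * b (k - k1)%Z * ker k1 (k - k1)%Z)).
Definition nrm2 (s : R) (a : Z -> R) : R := Series (pt (sq (fun j => W s j * a j))).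

Lemma W_pos s k : 0 < W s k.
Proof. unfold W, Rpower. apply exp_pos. Qed.

Lemma W_ge1 s k : 0 <= s -> k <> 0%Z -> 1 <= W s k.
Proof.
  intros Hs Hk. unfold W.
  replace 1 with (Rpower 1 s) at 1 by (unfold Rpower; rewrite ln_1, Rmult_0_r, exp_0; auto).
  apply Rle_Rpower_l; auto. split; [lra|]. apply IZR_le. lia.
Qed.

Lemma W_tri s k1 k2 : 0 <= s -> k1 <> 0%Z -> k2 <> 0%Z -> (k1 + k2 <> 0)%Z ->
  W s (k1 + k2) <= Rpower 2 s * W s k1 * W s k2.
Proof.
  intros Hs H1 H2 H3. unfold W.
  assert (Hp1 : 0 < IZR (Z.abs k1)) by (apply IZR_lt; lia).
  assert (Hp2 : 0 < IZR (Z.abs k2)) by (apply IZR_lt; lia).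
  rewrite Rpower_mult_distr by lra. rewrite Rpower_mult_distr by nra.
  apply Rle_Rpower_l; auto. split. apply IZR_lt; lia.
  rewrite <- !mult_IZR. apply IZR_le. nia.
Qed.

Lemma ker_0l y : ker 0 y = 0.
Proof. unfold ker. rewrite Rmult_0_l, Rinv_0, Rabs_R0. auto. Qed.
Lemma ker_0r y : ker y 0 = 0.
Proof. unfold ker. rewrite Rmult_0_r, Rinv_0, Rabs_R0. auto. Qed.
Lemma ker_nonneg x y : 0 <= ker x y.
Proof. apply Rabs_pos. Qed.
Lemma ker_sq x y : ker x y ^ 2 = (/ IZR x) ^ 2 * (/ IZR y) ^ 2.
Proof. unfold ker. rewrite pow2_abs, Rinv_mult. ring. Qed.

Lemma per_k s a b k (x y : Z -> R) : 0 <= s -> (forall j, 0 <= a j) -> (forall j, 0 <= b j) ->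
  k <> 0%Z -> (forall j, 0 <= x j) -> (forall j, 0 <= y j) ->
  (forall k1, W s k1 * a k1 * (W s (k - k1)%Z * b (k - k1)%Z) * ker k1 (k - k1)%Z = x k1 * y k1) ->
  ex_series (pt (sq x)) -> ex_series (pt (sq y)) ->
  ex_series (pt (fun k1 => a k1 * b (k - k1)%Z * ker k1 (k - k1)%Z)) /\
  (W s k * Mab a b k) ^ 2 <= Rpower 2 s ^ 2 * Series (pt (sq x)) * Series (pt (sq y)).
Proof.
  intros Hs Ha Hb Hk Hx Hy Hxy Ex Ey.
  destruct (CS_Z x y Hx Hy Ex Ey) as [Exy Hcs].
  set (h := fun k1 => a k1 * b (k - k1)%Z * ker k1 (k - k1)%Z).
  assert (Hh0 : forall k1, 0 <= h k1).
  { intro. unfold h. apply Rmult_le_pos; [apply Rmult_le_pos|apply ker_nonneg]; auto. }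
  assert (Hpw : forall k1, W s k * h k1 <= Rpower 2 s * (x k1 * y k1)).
  { intro k1. rewrite <- Hxy. unfold h.
    destruct (Z.eq_dec k1 0) as [->|H1]. rewrite ker_0l. nra.
    destruct (Z.eq_dec (k - k1) 0) as [E|H2]. rewrite E, ker_0r. nra.
    assert (Hw := W_tri s k1 (k - k1) Hs H1 H2). replace (k1 + (k - k1))%Z with k in Hw by lia.
    pose proof (Ha k1). pose proof (Hb (k-k1)%Z). pose proof (ker_nonneg k1 (k-k1)).
    pose proof (W_pos s k1). pose proof (W_pos s (k-k1)).
    assert (0 <= a k1 * b (k - k1)%Z * ker k1 (k - k1)%Z) by (apply Rmult_le_pos; [apply Rmult_le_pos|]; auto).
    apply Rle_trans with (Rpower 2 s * W s k1 * W s (k - k1)%Z * (a k1 * b (k - k1)%Z * ker k1 (k - k1)%Z)).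
    apply Rmult_le_compat_r; auto. right; ring. }
  assert (Hw1 := W_ge1 s k Hs Hk).
  assert (Hpt : forall n, 0 <= W s k * pt h n <= Rpower 2 s * pt (fun j => x j * y j) n).
  { intro n. unfold pt. pose proof (Hpw (Z.of_nat (S n))). pose proof (Hpw (- Z.of_nat (S n))%Z).
    pose proof (Hh0 (Z.of_nat (S n))). pose proof (Hh0 (- Z.of_nat (S n))%Z). split; nra. }
  assert (E2 : ex_series (fun n => Rpower 2 s * pt (fun j => x j * y j) n)) by (apply exs_scal; auto).
  assert (Eh : ex_series (pt h)).
  { apply (exs_le _ (fun n => Rpower 2 s * pt (fun j => x j * y j) n)); auto.
    intro n; split. apply pt_nonneg; auto. pose proof (Hpt n). pose proof (pt_nonneg h Hh0 n). nra. }
  split; auto.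
  assert (HM : 0 <= W s k * Mab a b k <= Rpower 2 s * Series (pt (fun j => x j * y j))).
  { unfold Mab. fold h. rewrite <- Series_scal_l, <- Series_scal_l. split.
    apply ser_nonneg. intro n. apply Hpt.
    apply Series_le; auto. }
  assert (0 <= Series (pt (fun j => x j * y j))) by (apply ser_nonneg; apply pt_nonneg; intro; apply Rmult_le_pos; auto).
  assert (0 < Rpower 2 s) by (unfold Rpower; apply exp_pos).
  apply Rle_trans with ((Rpower 2 s * Series (pt (fun j => x j * y j)))^2).
  apply pow_incr; auto.
  rewrite Rpow_mult_distr. rewrite Rmult_assoc. apply Rmult_le_compat_l; auto.
  apply pow_le; lra.
Qed.

Lemma assemble (V I : Z -> R) (c : R) : 0 <= c -> (forall k, k <> 0%Z -> V k ^ 2 <= c * I k) ->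
  (forall k, 0 <= I k) -> ex_series (pt I) ->
  ex_series (pt (sq V)) /\ Series (pt (sq V)) <= c * Series (pt I).
Proof.
  intros Hc HV HI EI.
  assert (Hb : forall n, 0 <= pt (sq V) n <= c * pt I n).
  { intro n. unfold pt, sq. split. pose proof (pow2_ge_0 (V (Z.of_nat (S n)))). pose proof (pow2_ge_0 (V (- Z.of_nat (S n))%Z)). lra.
    pose proof (HV (Z.of_nat (S n)) ltac:(lia)). pose proof (HV (- Z.of_nat (S n))%Z ltac:(lia)). lra. }
  split. apply (exs_le _ _ Hb). apply exs_scal; auto.
  rewrite <- Series_scal_l. apply Series_le; auto. apply exs_scal; auto.
Qed.

Definition isq : Z -> R := fun j => (/ IZR j) ^ 2.
Definition Z2 : R := Series (pt isq).

Lemma isq_nonneg j : 0 <= isq j.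
Proof. apply pow2_ge_0. Qed.
Lemma isq_0 : isq 0%Z = 0.
Proof. unfold isq. rewrite Rinv_0. ring. Qed.

Lemma pt_isq n : pt isq n = 2 * / (INR n + 1) ^ 2.
Proof.
  unfold pt, isq. rewrite opp_IZR, <- INR_IZR_INZ, S_INR.
  assert (0 < INR n + 1) by (pose proof (pos_INR n); lra). field. lra.
Qed.

Lemma isq_ex : ex_series (pt isq) /\ Z2 <= 4.
Proof.
  assert (Hb : forall M, sum_n (pt isq) M <= 4 - 2 / (INR M + 1)).
  { induction M. rewrite sum_O, pt_isq. simpl. lra.
    rewrite sum_Sn. unfold plus; simpl (AbelianMonoid.plus _ _). rewrite pt_isq.
    rewrite S_INR. set (x := INR M). assert (0 <= x) by apply pos_INR.
    assert (E : 2 / (x + 1) - 2 / (x + 1 + 1) - 2 * / (x + 1 + 1) ^ 2 = 2 / ((x+1) * (x+2)^2)) by (field; lra).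
    assert (0 <= 2 / ((x+1) * (x+2)^2)).
    { unfold Rdiv. apply Rmult_le_pos. lra. left; apply Rinv_0_lt_compat. apply Rmult_lt_0_compat; nra. }
    clear -IHM E H0. set (p := 2 * / (x+1+1)^2) in *. set (q := 2/(x+1)) in *. set (r := 2/(x+1+1)) in *. set (w := 2 / ((x + 1) * (x + 2) ^ 2)) in *. assert (Hq: q = 2/(INR M + 1)) by reflexivity. rewrite <- Hq in IHM. lra. }
  assert (Hb' : forall M, sum_n (pt isq) M <= 4).
  { intro M. specialize (Hb M). assert (0 <= 2 / (INR M + 1)).
    { unfold Rdiv. apply Rmult_le_pos. lra. left; apply Rinv_0_lt_compat. pose proof (pos_INR M); lra. } lra. }
  apply ser_bounded; auto. apply pt_nonneg, isq_nonneg.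
Qed.

Definition Kc (s : R) : R := Rpower 2 s ^ 2 * Z2.

Lemma nrm2_nonneg s a : 0 <= nrm2 s a.
Proof. apply ser_nonneg. apply pt_nonneg. intro; apply pow2_ge_0. Qed.

Lemma isq_small (N : nat) j : (1 <= N)%nat -> (Z.of_nat N < Z.abs j)%Z -> isq j <= / INR N ^ 2.
Proof.
  intros HN Hj. unfold isq.
  assert (Hj0 : IZR j <> 0) by (intro E; apply eq_IZR in E; lia).
  replace ((/ IZR j) ^ 2) with (/ (IZR j ^ 2)) by (field; auto).
  apply Rinv_le_contravar. apply pow_lt. apply lt_0_INR; lia.
  rewrite <- (pow2_abs (IZR j)). apply pow_incr. split. apply pos_INR.
  rewrite Rabs_Zabs, INR_IZR_INZ. apply IZR_le. lia.
Qed.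

Lemma small_bound s (N : nat) (c : Z -> R) : (1 <= N)%nat ->
  (forall j, (Z.abs j <= Z.of_nat N)%Z -> c j = 0) ->
  ex_series (pt (sq (fun j => W s j * c j))) ->
  ex_series (pt (fun j => (W s j * c j) ^ 2 * isq j)) /\
  Series (pt (fun j => (W s j * c j) ^ 2 * isq j)) <= / INR N ^ 2 * nrm2 s c.
Proof.
  intros HN Hc E.
  assert (Hb : forall n, 0 <= pt (fun j => (W s j * c j) ^ 2 * isq j) n <= / INR N ^ 2 * pt (sq (fun j => W s j * c j)) n).
  { intro n. assert (Hp : forall j, 0 <= (W s j * c j) ^ 2 * isq j <= / INR N ^ 2 * (W s j * c j) ^ 2).
    { intro j. split. apply Rmult_le_pos; [apply pow2_ge_0|apply isq_nonneg].
      destruct (Z_le_gt_dec (Z.abs j) (Z.of_nat N)) as [H|H].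
      rewrite Hc by auto. rewrite Rmult_0_r. simpl. lra.
      pose proof (isq_small N j HN ltac:(lia)). pose proof (pow2_ge_0 (W s j * c j)). nra. }
    unfold pt, sq. pose proof (Hp (Z.of_nat (S n))). pose proof (Hp (- Z.of_nat (S n))%Z). lra. }
  split. apply (exs_le _ _ Hb). apply exs_scal; auto.
  unfold nrm2. rewrite <- Series_scal_l. apply Series_le; auto. apply exs_scal; auto.
Qed.

Lemma Kmain s (N : nat) (a b : Z -> R) : 0 <= s -> (1 <= N)%nat ->
  (forall j, 0 <= a j) -> (forall j, 0 <= b j) -> a 0%Z = 0 -> b 0%Z = 0 ->
  ex_series (pt (sq (fun j => W s j * a j))) -> ex_series (pt (sq (fun j => W s j * b j))) ->
  ((forall j, (Z.abs j <= Z.of_nat N)%Z -> b j = 0) \/ (forall j, (Z.abs j <= Z.of_nat N)%Z -> a j = 0)) ->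
  (forall k, k <> 0%Z -> ex_series (pt (fun k1 => a k1 * b (k - k1)%Z * ker k1 (k - k1)%Z))) /\
  ex_series (pt (sq (fun k => W s k * Mab a b k))) /\
  Series (pt (sq (fun k => W s k * Mab a b k))) <= Kc s * / INR N ^ 2 * nrm2 s a * nrm2 s b.
Proof.
  intros Hs HN Ha Hb Ha0 Hb0 Ea Eb Hsm.
  pose proof isq_ex as [Ei HZ2].
  assert (H2s : 0 < Rpower 2 s) by (unfold Rpower; apply exp_pos).
  assert (HZ : 0 <= Z2) by (apply ser_nonneg; apply pt_nonneg; apply isq_nonneg).
  pose proof (nrm2_nonneg s a). pose proof (nrm2_nonneg s b).
  assert (HiN : 0 <= / INR N ^ 2) by (left; apply Rinv_0_lt_compat, pow_lt, lt_0_INR; lia).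
  destruct Hsm as [Hsm|Hsm].
  -
    set (f := isq). set (g := fun j => (W s j * b j) ^ 2 * isq j).
    assert (Hf : forall j, 0 <= f j) by apply isq_nonneg.
    assert (Hg : forall j, 0 <= g j) by (intro; apply Rmult_le_pos; [apply pow2_ge_0|apply isq_nonneg]).
    assert (Hg0 : g 0%Z = 0) by (unfold g; rewrite Hb0; ring).
    destruct (small_bound s N b HN Hsm Eb) as [Eg Hgb]. fold g in Eg, Hgb.
    destruct (dconv f g Hf Hg isq_0 Hg0 Ei Eg) as [Ein [EI HI]].
    set (I := fun k => Series (pt (fun k1 => f k1 * g (k - k1)%Z))). fold I in EI, HI.
    assert (Hk : forall k, k <> 0%Z ->
       ex_series (pt (fun k1 => a k1 * b (k - k1)%Z * ker k1 (k - k1)%Z)) /\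
       (W s k * Mab a b k) ^ 2 <= Rpower 2 s ^ 2 * nrm2 s a * I k).
    { intros k Hk.
      assert (Hsy : forall k1, sq (fun k1 => W s (k - k1)%Z * b (k - k1)%Z * ker k1 (k - k1)%Z) k1 = f k1 * g (k - k1)%Z).
      { intro k1. unfold sq, f, g, isq. rewrite Rpow_mult_distr, ker_sq. ring. }
      assert (Ey : ex_series (pt (sq (fun k1 => W s (k - k1)%Z * b (k - k1)%Z * ker k1 (k - k1)%Z)))).
      { apply (exs_ext (pt (fun k1 => f k1 * g (k - k1)%Z))); auto. intro n; unfold pt; rewrite !Hsy; auto. }
      destruct (per_k s a b k (fun j => W s j * a j) (fun k1 => W s (k - k1)%Z * b (k - k1)%Z * ker k1 (k - k1)%Z)
                  Hs Ha Hb Hk) as [E1 E2]; auto.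
      + intro j. apply Rmult_le_pos; [left; apply W_pos|auto].
      + intro j. apply Rmult_le_pos; [apply Rmult_le_pos; [left; apply W_pos|auto]|apply ker_nonneg].
      + intro k1. ring.
      + split; auto. eapply Rle_trans. apply E2. right. unfold nrm2, I. f_equal.
        apply Series_ext. intro n; unfold pt; rewrite !Hsy; auto. }
    split. intros k Hk'. apply (Hk k Hk').
    assert (Hc : 0 <= Rpower 2 s ^ 2 * nrm2 s a) by (apply Rmult_le_pos; auto; apply pow2_ge_0).
    assert (HI0 : forall k, 0 <= I k) by (intro; apply ser_nonneg; apply pt_nonneg; intro; apply Rmult_le_pos; auto).
    destruct (assemble (fun k => W s k * Mab a b k) I _ Hc (fun k Hk' => proj2 (Hk k Hk')) HI0 EI) as [E3 E4].
    split; auto. eapply Rle_trans. apply E4.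
    assert (Series (pt I) <= Z2 * (/ INR N ^ 2 * nrm2 s b)).
    { eapply Rle_trans. apply HI. apply Rmult_le_compat; auto. apply ser_nonneg, pt_nonneg; auto. right; auto. }
    unfold Kc. apply Rle_trans with (Rpower 2 s ^ 2 * nrm2 s a * (Z2 * (/ INR N ^ 2 * nrm2 s b))).
    apply Rmult_le_compat_l; auto. right; ring.
  -
    set (f := fun j => (W s j * a j) ^ 2 * isq j). set (g := isq).
    assert (Hg : forall j, 0 <= g j) by apply isq_nonneg.
    assert (Hf : forall j, 0 <= f j) by (intro; apply Rmult_le_pos; [apply pow2_ge_0|apply isq_nonneg]).
    assert (Hf0 : f 0%Z = 0) by (unfold f; rewrite Ha0; ring).
    destruct (small_bound s N a HN Hsm Ea) as [Ef Hfb]. fold f in Ef, Hfb.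
    destruct (dconv f g Hf Hg Hf0 isq_0 Ef Ei) as [Ein [EI HI]].
    set (I := fun k => Series (pt (fun k1 => f k1 * g (k - k1)%Z))). fold I in EI, HI.
    set (hb := sq (fun j => W s j * b j)).
    assert (Hhb : forall j, 0 <= hb j) by (intro; apply pow2_ge_0).
    assert (Hhb0 : hb 0%Z = 0) by (unfold hb, sq; rewrite Hb0; ring).
    assert (Hk : forall k, k <> 0%Z ->
       ex_series (pt (fun k1 => a k1 * b (k - k1)%Z * ker k1 (k - k1)%Z)) /\
       (W s k * Mab a b k) ^ 2 <= Rpower 2 s ^ 2 * I k * nrm2 s b).
    { intros k Hk.
      assert (Hsx : forall k1, sq (fun k1 => W s k1 * a k1 * ker k1 (k - k1)%Z) k1 = f k1 * g (k - k1)%Z).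
      { intro k1. unfold sq, f, g, isq. rewrite Rpow_mult_distr, ker_sq. ring. }
      assert (Ex : ex_series (pt (sq (fun k1 => W s k1 * a k1 * ker k1 (k - k1)%Z)))).
      { apply (exs_ext (pt (fun k1 => f k1 * g (k - k1)%Z))); auto. intro n; unfold pt; rewrite !Hsx; auto. }
      assert (Hyb : forall M, sum_n (pt (sq (fun k1 => W s (k - k1)%Z * b (k - k1)%Z))) M <= nrm2 s b).
      { intro M. unfold nrm2. fold hb.
        rewrite (sum_n_ext _ (fun n => hb (k + Z.of_nat (S n))%Z + hb (k - Z.of_nat (S n))%Z)).
        apply shift_le; auto.
        intro n. unfold pt, sq, hb, sq. rewrite Rplus_comm. f_equal; f_equal; f_equal; f_equal; lia. }
      destruct (ser_bounded _ _ (pt_nonneg _ (fun j => pow2_ge_0 _)) Hyb) as [Ey Hy].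
      destruct (per_k s a b k (fun k1 => W s k1 * a k1 * ker k1 (k - k1)%Z) (fun k1 => W s (k - k1)%Z * b (k - k1)%Z)
                  Hs Ha Hb Hk) as [E1 E2]; auto.
      + intro j. apply Rmult_le_pos; [apply Rmult_le_pos; [left; apply W_pos|auto]|apply ker_nonneg].
      + intro j. apply Rmult_le_pos; [left; apply W_pos|auto].
      + intro k1. ring.
      + split; auto. eapply Rle_trans. apply E2.
        assert (HX : Series (pt (sq (fun k1 => W s k1 * a k1 * ker k1 (k - k1)%Z))) = I k).
        { unfold I. apply Series_ext. intro n; unfold pt; rewrite !Hsx; auto. }
        rewrite HX. apply Rmult_le_compat_l. apply Rmult_le_pos. apply pow2_ge_0.
        apply ser_nonneg; apply pt_nonneg; intro; apply Rmult_le_pos; auto. auto. }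
    split. intros k Hk'. apply (Hk k Hk').
    assert (HI0 : forall k, 0 <= I k) by (intro; apply ser_nonneg; apply pt_nonneg; intro; apply Rmult_le_pos; auto).
    assert (Hc : 0 <= Rpower 2 s ^ 2 * nrm2 s b) by (apply Rmult_le_pos; auto; apply pow2_ge_0).
    assert (Hk2 : forall k, k <> 0%Z -> (W s k * Mab a b k) ^ 2 <= Rpower 2 s ^ 2 * nrm2 s b * I k).
    { intros k Hk'. eapply Rle_trans. apply (proj2 (Hk k Hk')). right; ring. }
    destruct (assemble (fun k => W s k * Mab a b k) I _ Hc Hk2 HI0 EI) as [E3 E4].
    split; auto. eapply Rle_trans. apply E4.
    assert (Series (pt I) <= (/ INR N ^ 2 * nrm2 s a) * Z2).
    { eapply Rle_trans. apply HI. apply Rmult_le_compat; [apply ser_nonneg, pt_nonneg; auto | apply ser_nonneg, pt_nonneg; auto | exact Hfb | right; reflexivity]. }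
    unfold Kc. apply Rle_trans with (Rpower 2 s ^ 2 * nrm2 s b * (/ INR N ^ 2 * nrm2 s a * Z2)).
    apply Rmult_le_compat_l; auto. right; ring.
Qed.

Lemma fst_le_Cmod (c : C) : Rabs (fst c) <= Cmod c.
Proof. pose proof (Rmax_Cmod c). pose proof (Rmax_l (Rabs (fst c)) (Rabs (snd c))). lra. Qed.
Lemma snd_le_Cmod (c : C) : Rabs (snd c) <= Cmod c.
Proof. pose proof (Rmax_Cmod c). pose proof (Rmax_r (Rabs (fst c)) (Rabs (snd c))). lra. Qed.

Lemma zsum_parts (g : Z -> C) : ex_series (pt (fun j => Cmod (g j))) ->
  ex_series (fun n => fst (g (Z.of_nat (S n))) + fst (g (- Z.of_nat (S n))%Z)) /\
  ex_series (fun n => snd (g (Z.of_nat (S n))) + snd (g (- Z.of_nat (S n))%Z)) /\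
  Rabs (Series (fun n => fst (g (Z.of_nat (S n))) + fst (g (- Z.of_nat (S n))%Z))) <= Series (pt (fun j => Cmod (g j))) /\
  Rabs (Series (fun n => snd (g (Z.of_nat (S n))) + snd (g (- Z.of_nat (S n))%Z))) <= Series (pt (fun j => Cmod (g j))).
Proof.
  intros E.
  assert (H1 : forall n, Rabs (fst (g (Z.of_nat (S n))) + fst (g (- Z.of_nat (S n))%Z)) <= pt (fun j => Cmod (g j)) n).
  { intro n. unfold pt. eapply Rle_trans. apply Rabs_triang. apply Rplus_le_compat; apply fst_le_Cmod. }
  assert (H2 : forall n, Rabs (snd (g (Z.of_nat (S n))) + snd (g (- Z.of_nat (S n))%Z)) <= pt (fun j => Cmod (g j)) n).
  { intro n. unfold pt. eapply Rle_trans. apply Rabs_triang. apply Rplus_le_compat; apply snd_le_Cmod. }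
  destruct (ser_le_gen _ _ H1 E). destruct (ser_le_gen _ _ H2 E). tauto.
Qed.

Lemma zsum_bound (g : Z -> C) : ex_series (pt (fun j => Cmod (g j))) ->
  Cmod (zsum g) <= 2 * Series (pt (fun j => Cmod (g j))).
Proof.
  intros E. destruct (zsum_parts g E) as [_ [_ [H1 H2]]].
  eapply Rle_trans. apply Cmod_2Rmax. unfold zsum; simpl.
  assert (Hs : sqrt 2 <= 2).
  { rewrite <- (sqrt_square 2) at 2 by lra. apply sqrt_le_1_alt. lra. }
  assert (0 <= Series (pt (fun j => Cmod (g j)))) by (eapply Rle_trans; [apply Rabs_pos|apply H1]).
  apply Rle_trans with (sqrt 2 * Series (pt (fun j => Cmod (g j)))).
  apply Rmult_le_compat_l. apply sqrt_pos. apply Rmax_lub; auto.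
  apply Rmult_le_compat_r; auto.
Qed.

Lemma zsum_minus (g h : Z -> C) : ex_series (pt (fun j => Cmod (g j))) -> ex_series (pt (fun j => Cmod (h j))) ->
  Cminus (zsum g) (zsum h) = zsum (fun j => Cminus (g j) (h j)).
Proof.
  intros Eg Eh. destruct (zsum_parts g Eg) as [G1 [G2 _]]. destruct (zsum_parts h Eh) as [H1 [H2 _]].
  unfold zsum, Cminus, Cplus, Copp; simpl. f_equal.
  - rewrite <- Series_opp. rewrite <- Series_plus; auto. apply Series_ext; intro; lra.
    apply (exs_ext (fun n => (-1) * (fst (h (Z.of_nat (S n))) + fst (h (- Z.of_nat (S n))%Z)))). intro; simpl; ring. apply exs_scal; auto.
  - rewrite <- Series_opp. rewrite <- Series_plus; auto. apply Series_ext; intro; lra.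
    apply (exs_ext (fun n => (-1) * (snd (h (Z.of_nat (S n))) + snd (h (- Z.of_nat (S n))%Z)))). intro; simpl; ring. apply exs_scal; auto.
Qed.

Lemma Cmod_cexpi th : Cmod (cexpi th) = 1.
Proof. unfold Cmod, cexpi. cbn [fst snd]. replace (cos th ^ 2 + sin th ^ 2) with 1. apply sqrt_1.
  pose proof (sin2_cos2 th). unfold Rsqr in H. simpl. lra. Qed.

Lemma Cmod_RtoC_inv x y : Cmod (RtoC (/ (IZR x * IZR y))) = ker x y.
Proof. rewrite Cmod_R. auto. Qed.

Definition Tm (t : R) (phi psi : coeffs) (k k1 : Z) : C :=
  if (k1 =? k)%Z then 0%C else
  Cmult (Cmult (cexpi (3 * IZR k * IZR k1 * IZR (k - k1) * t)) (RtoC (/ (IZR k1 * IZR (k - k1)))))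
        (Cmult (phi k1) (psi (k - k1)%Z)).

Lemma B2_eq t phi psi k : B2 t phi psi k = if (k =? 0)%Z then 0%C else Cmult (RtoC (1/6)) (zsum (Tm t phi psi k)).
Proof. reflexivity. Qed.

Lemma Tm_bound t phi psi k k1 :
  Cmod (Tm t phi psi k k1) <= Cmod (phi k1) * Cmod (psi (k - k1)%Z) * ker k1 (k - k1)%Z.
Proof.
  unfold Tm. destruct (k1 =? k)%Z.
  - rewrite Cmod_0. pose proof (Cmod_ge_0 (phi k1)). pose proof (Cmod_ge_0 (psi (k - k1)%Z)).
    pose proof (ker_nonneg k1 (k - k1)). apply Rmult_le_pos; auto. apply Rmult_le_pos; auto.
  - rewrite !Cmod_mult, Cmod_cexpi, Cmod_RtoC_inv. lra.
Qed.

Lemma Tm_diff t phi psi phi' psi' k k1 :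
  Cmod (Cminus (Tm t phi psi k k1) (Tm t phi' psi' k k1)) <=
  Cmod (Cminus (phi k1) (phi' k1)) * Cmod (psi (k - k1)%Z) * ker k1 (k - k1)%Z
  + Cmod (phi' k1) * Cmod (Cminus (psi (k - k1)%Z) (psi' (k - k1)%Z)) * ker k1 (k - k1)%Z.
Proof.
  unfold Tm. destruct (k1 =? k)%Z.
  - replace (Cminus 0 0) with (RtoC 0) by (apply injective_projections; simpl; ring).
    rewrite Cmod_0.
    pose proof (Cmod_ge_0 (Cminus (phi k1) (phi' k1))). pose proof (Cmod_ge_0 (psi (k - k1)%Z)).
    pose proof (Cmod_ge_0 (phi' k1)). pose proof (Cmod_ge_0 (Cminus (psi (k - k1)%Z) (psi' (k - k1)%Z))).
    pose proof (ker_nonneg k1 (k - k1)).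
    apply Rplus_le_le_0_compat; apply Rmult_le_pos; auto; apply Rmult_le_pos; auto.
  - set (e := Cmult (cexpi (3 * IZR k * IZR k1 * IZR (k - k1) * t)) (RtoC (/ (IZR k1 * IZR (k - k1))))).
    assert (He : Cmod e = ker k1 (k - k1)%Z) by (unfold e; rewrite Cmod_mult, Cmod_cexpi, Cmod_RtoC_inv; ring).
    set (a := phi k1). set (b := psi (k - k1)%Z). set (a' := phi' k1). set (b' := psi' (k - k1)%Z).
    replace (Cminus (Cmult e (Cmult a b)) (Cmult e (Cmult a' b')))
      with (Cplus (Cmult e (Cmult (Cminus a a') b)) (Cmult e (Cmult a' (Cminus b b')))).
    2:{ apply injective_projections; simpl; ring. }
    eapply Rle_trans. apply Cmod_triangle. rewrite !Cmod_mult, He. lra.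
Qed.

Lemma W_sq s n : W s (Z.of_nat (S n)) ^ 2 = Rpower (INR (S n)) (2 * s) /\
                 W s (- Z.of_nat (S n))%Z ^ 2 = Rpower (INR (S n)) (2 * s).
Proof.
  unfold W. rewrite Z.abs_opp, (Z.abs_eq (Z.of_nat (S n))) by lia. rewrite <- INR_IZR_INZ.
  replace (2 * s) with (s + s) by ring. rewrite Rpower_plus. split; ring.
Qed.

Lemma Hs_term_eq s u n : Hs_term s u n = pt (sq (fun j => W s j * Cmod (u j))) n.
Proof.
  unfold Hs_term, pt, sq. destruct (W_sq s n) as [H1 H2].
  rewrite !Rpow_mult_distr, H1, H2. ring.
Qed.

Lemma Hs_norm2_eq s u : Hs_norm2 s u = nrm2 s (fun j => Cmod (u j)).
Proof. unfold Hs_norm2, nrm2. apply Series_ext. apply Hs_term_eq. Qed.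

Lemma Hs_ex_eq s u : ex_series (Hs_term s u) -> ex_series (pt (sq (fun j => W s j * Cmod (u j)))).
Proof. apply exs_ext. apply Hs_term_eq. Qed.

Lemma Hs_term_nonneg s u n : 0 <= Hs_term s u n.
Proof. rewrite Hs_term_eq. apply pt_nonneg. intro; apply pow2_ge_0. Qed.

Lemma Hs_norm2_nonneg s u : 0 <= Hs_norm2 s u.
Proof. apply ser_nonneg. apply Hs_term_nonneg. Qed.

Lemma Hs_cmp s (f g : coeffs) : (forall k, Cmod (f k) <= Cmod (g k)) -> ex_series (Hs_term s g) ->
  ex_series (Hs_term s f) /\ Hs_norm2 s f <= Hs_norm2 s g.
Proof.
  intros H E.
  assert (Hb : forall n, 0 <= Hs_term s f n <= Hs_term s g n).
  { intro n. split. apply Hs_term_nonneg. rewrite !Hs_term_eq. unfold pt, sq.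
    assert (forall j, (W s j * Cmod (f j)) ^ 2 <= (W s j * Cmod (g j)) ^ 2).
    { intro j. apply pow_incr. pose proof (W_pos s j). pose proof (Cmod_ge_0 (f j)). split. nra.
      apply Rmult_le_compat_l; auto; lra. }
    pose proof (H0 (Z.of_nat (S n))). pose proof (H0 (- Z.of_nat (S n))%Z). lra. }
  split. apply (exs_le _ _ Hb E). apply Series_le; auto.
Qed.

Lemma Hs_sub_ex s (f g : coeffs) : ex_series (Hs_term s f) -> ex_series (Hs_term s g) ->
  ex_series (Hs_term s (csubf f g)).
Proof.
  intros Ef Eg.
  apply (exs_le _ (fun n => 2 * Hs_term s f n + 2 * Hs_term s g n)).
  2:{ apply exs_plus; apply exs_scal; auto. }
  intro n. split. apply Hs_term_nonneg. rewrite !Hs_term_eq. unfold pt, sq, csubf.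
  assert (forall j, (W s j * Cmod (Cminus (f j) (g j))) ^ 2 <= 2 * (W s j * Cmod (f j)) ^ 2 + 2 * (W s j * Cmod (g j)) ^ 2).
  { intro j. assert (Cmod (Cminus (f j) (g j)) <= Cmod (f j) + Cmod (g j)).
    { unfold Cminus. eapply Rle_trans. apply Cmod_triangle. rewrite Cmod_opp. lra. }
    pose proof (W_pos s j). pose proof (Cmod_ge_0 (Cminus (f j) (g j))). pose proof (Cmod_ge_0 (f j)). pose proof (Cmod_ge_0 (g j)).
    assert (W s j * Cmod (Cminus (f j) (g j)) <= W s j * Cmod (f j) + W s j * Cmod (g j)) by nra.
    assert (0 <= W s j * Cmod (Cminus (f j) (g j))) by nra.
    set (x := W s j * Cmod (Cminus (f j) (g j))) in *. set (y := W s j * Cmod (f j)) in *. set (z := W s j * Cmod (g j)) in *.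
    assert (x ^ 2 <= (y + z) ^ 2) by (apply pow_incr; split; auto).
    assert (0 <= (y - z) ^ 2) by apply pow2_ge_0. nra. }
  pose proof (H (Z.of_nat (S n))). pose proof (H (- Z.of_nat (S n))%Z). lra.
Qed.

Lemma Mab_nonneg a b k : (forall j, 0 <= a j) -> (forall j, 0 <= b j) -> 0 <= Mab a b k.
Proof. intros. apply ser_nonneg, pt_nonneg. intro. apply Rmult_le_pos; [apply Rmult_le_pos|apply ker_nonneg]; auto. Qed.

Lemma B2pair s (N : nat) t (phi psi phi' psi' : coeffs) : 0 <= s -> (1 <= N)%nat ->
  phi 0%Z = 0%C -> psi 0%Z = 0%C -> phi' 0%Z = 0%C -> psi' 0%Z = 0%C ->
  ex_series (Hs_term s phi) -> ex_series (Hs_term s psi) -> ex_series (Hs_term s phi') -> ex_series (Hs_term s psi') ->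
  ((forall j, (Z.abs j <= Z.of_nat N)%Z -> psi j = 0%C /\ psi' j = 0%C) \/
   (forall j, (Z.abs j <= Z.of_nat N)%Z -> phi j = 0%C /\ phi' j = 0%C)) ->
  exists m : Z -> R, (forall k, k <> 0%Z -> Cmod (Cminus (B2 t phi psi k) (B2 t phi' psi' k)) <= m k) /\
    (forall k, 0 <= m k) /\ ex_series (pt (sq (fun k => W s k * m k))) /\
    Series (pt (sq (fun k => W s k * m k))) <= Kc s * / INR N ^ 2 *
      (Hs_norm2 s (csubf phi phi') * Hs_norm2 s psi + Hs_norm2 s phi' * Hs_norm2 s (csubf psi psi')).
Proof.
  intros Hs HN H1 H2 H3 H4 E1 E2 E3 E4 Hsm.
  set (al := fun j => Cmod (csubf phi phi' j)).
  set (bp := fun j => Cmod (psi j)).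
  set (ap' := fun j => Cmod (phi' j)).
  set (be := fun j => Cmod (csubf psi psi' j)).
  set (ap := fun j => Cmod (phi j)).
  set (bp' := fun j => Cmod (psi' j)).
  assert (Eal := Hs_ex_eq s _ (Hs_sub_ex s phi phi' E1 E3)). fold al in Eal.
  assert (Ebe := Hs_ex_eq s _ (Hs_sub_ex s psi psi' E2 E4)). fold be in Ebe.
  assert (Ebp := Hs_ex_eq s _ E2). fold bp in Ebp.
  assert (Eap := Hs_ex_eq s _ E1). fold ap in Eap.
  assert (Eap' := Hs_ex_eq s _ E3). fold ap' in Eap'.
  assert (Ebp' := Hs_ex_eq s _ E4). fold bp' in Ebp'.
  assert (Hnn : forall (f : coeffs) j, 0 <= Cmod (f j)) by (intros; apply Cmod_ge_0).
  assert (Z0 : forall (f : coeffs), f 0%Z = 0%C -> Cmod (f 0%Z) = 0) by (intros f Hf; rewrite Hf; apply Cmod_0).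
  assert (Hal0 : al 0%Z = 0) by (unfold al, csubf; rewrite H1, H3; replace (Cminus 0 0) with (RtoC 0) by (apply injective_projections; simpl; ring); apply Cmod_0).
  assert (Hbe0 : be 0%Z = 0) by (unfold be, csubf; rewrite H2, H4; replace (Cminus 0 0) with (RtoC 0) by (apply injective_projections; simpl; ring); apply Cmod_0).
  assert (Hsub : forall (f g : coeffs) j, f j = 0%C -> g j = 0%C -> Cmod (csubf f g j) = 0).
  { intros f g j Hf Hg. unfold csubf. rewrite Hf, Hg. replace (Cminus 0 0) with (RtoC 0) by (apply injective_projections; simpl; ring). apply Cmod_0. }
  assert (K1 : (forall j, (Z.abs j <= Z.of_nat N)%Z -> bp j = 0) \/ (forall j, (Z.abs j <= Z.of_nat N)%Z -> al j = 0)).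
  { destruct Hsm as [Hm|Hm]; [left|right]; intros j Hj; destruct (Hm j Hj); unfold bp, al; auto. rewrite H; apply Cmod_0. }
  assert (K2 : (forall j, (Z.abs j <= Z.of_nat N)%Z -> be j = 0) \/ (forall j, (Z.abs j <= Z.of_nat N)%Z -> ap' j = 0)).
  { destruct Hsm as [Hm|Hm]; [left|right]; intros j Hj; destruct (Hm j Hj); unfold be, ap'; auto. rewrite H0; apply Cmod_0. }
  assert (K3 : (forall j, (Z.abs j <= Z.of_nat N)%Z -> bp j = 0) \/ (forall j, (Z.abs j <= Z.of_nat N)%Z -> ap j = 0)).
  { destruct Hsm as [Hm|Hm]; [left|right]; intros j Hj; destruct (Hm j Hj); unfold bp, ap. rewrite H; apply Cmod_0. rewrite H; apply Cmod_0. }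
  assert (K4 : (forall j, (Z.abs j <= Z.of_nat N)%Z -> bp' j = 0) \/ (forall j, (Z.abs j <= Z.of_nat N)%Z -> ap' j = 0)).
  { destruct Hsm as [Hm|Hm]; [left|right]; intros j Hj; destruct (Hm j Hj); unfold bp', ap'. rewrite H0; apply Cmod_0. rewrite H0; apply Cmod_0. }
  destruct (Kmain s N al bp Hs HN (Hnn _) (Hnn _) Hal0 (Z0 _ H2) Eal Ebp K1) as [Q1 [R1 S1]].
  destruct (Kmain s N ap' be Hs HN (Hnn _) (Hnn _) (Z0 _ H3) Hbe0 Eap' Ebe K2) as [Q2 [R2 S2]].
  destruct (Kmain s N ap bp Hs HN (Hnn _) (Hnn _) (Z0 _ H1) (Z0 _ H2) Eap Ebp K3) as [Q3 _].
  destruct (Kmain s N ap' bp' Hs HN (Hnn _) (Hnn _) (Z0 _ H3) (Z0 _ H4) Eap' Ebp' K4) as [Q4 _].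
  assert (Hb : forall n, 0 <= pt (sq (fun k => W s k * (/ 3 * (Mab al bp k + Mab ap' be k)))) n <=
            pt (sq (fun k => W s k * Mab al bp k)) n + pt (sq (fun k => W s k * Mab ap' be k)) n).
  { intro n. split. apply pt_nonneg; intro; apply pow2_ge_0.
    assert (forall x y : R, (/3 * (x + y)) ^ 2 <= x ^ 2 + y ^ 2) by (intros; nra).
    unfold pt, sq.
    pose proof (H (W s (Z.of_nat (S n)) * Mab al bp (Z.of_nat (S n))) (W s (Z.of_nat (S n)) * Mab ap' be (Z.of_nat (S n)))).
    pose proof (H (W s (- Z.of_nat (S n))%Z * Mab al bp (- Z.of_nat (S n))%Z) (W s (- Z.of_nat (S n))%Z * Mab ap' be (- Z.of_nat (S n))%Z)).
    replace (W s (Z.of_nat (S n)) * (/ 3 * (Mab al bp (Z.of_nat (S n)) + Mab ap' be (Z.of_nat (S n)))))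
      with (/ 3 * (W s (Z.of_nat (S n)) * Mab al bp (Z.of_nat (S n)) + W s (Z.of_nat (S n)) * Mab ap' be (Z.of_nat (S n)))) by ring.
    replace (W s (- Z.of_nat (S n))%Z * (/ 3 * (Mab al bp (- Z.of_nat (S n))%Z + Mab ap' be (- Z.of_nat (S n))%Z)))
      with (/ 3 * (W s (- Z.of_nat (S n))%Z * Mab al bp (- Z.of_nat (S n))%Z + W s (- Z.of_nat (S n))%Z * Mab ap' be (- Z.of_nat (S n))%Z)) by ring.
    lra. }
  exists (fun k => / 3 * (Mab al bp k + Mab ap' be k)).
  split; [|split; [|split]].
  - intros k Hk. rewrite !B2_eq. replace (k =? 0)%Z with false by (symmetry; apply Z.eqb_neq; auto).
    assert (ET : ex_series (pt (fun j => Cmod (Tm t phi psi k j)))).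
    { apply (exs_le _ (pt (fun k1 => ap k1 * bp (k - k1)%Z * ker k1 (k - k1)%Z))); [|apply Q3; auto].
      intro n. split. apply pt_nonneg; intro; apply Cmod_ge_0.
      unfold pt. pose proof (Tm_bound t phi psi k (Z.of_nat (S n))). pose proof (Tm_bound t phi psi k (- Z.of_nat (S n))%Z).
      unfold ap, bp. lra. }
    assert (ET' : ex_series (pt (fun j => Cmod (Tm t phi' psi' k j)))).
    { apply (exs_le _ (pt (fun k1 => ap' k1 * bp' (k - k1)%Z * ker k1 (k - k1)%Z))); [|apply Q4; auto].
      intro n. split. apply pt_nonneg; intro; apply Cmod_ge_0.
      unfold pt. pose proof (Tm_bound t phi' psi' k (Z.of_nat (S n))). pose proof (Tm_bound t phi' psi' k (- Z.of_nat (S n))%Z).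
      unfold ap', bp'. lra. }
    replace (Cminus (Cmult (RtoC (1/6)) (zsum (Tm t phi psi k))) (Cmult (RtoC (1/6)) (zsum (Tm t phi' psi' k))))
      with (Cmult (RtoC (1/6)) (Cminus (zsum (Tm t phi psi k)) (zsum (Tm t phi' psi' k)))).
    2:{ apply injective_projections; simpl; ring. }
    rewrite zsum_minus by auto. rewrite Cmod_mult, Cmod_R, Rabs_pos_eq by lra.
    set (D := fun j => Cminus (Tm t phi psi k j) (Tm t phi' psi' k j)).
    set (U := fun k1 => al k1 * bp (k - k1)%Z * ker k1 (k - k1)%Z + ap' k1 * be (k - k1)%Z * ker k1 (k - k1)%Z).
    assert (HDU : forall n, 0 <= pt (fun j => Cmod (D j)) n <= pt U n).
    { intro n. split. apply pt_nonneg; intro; apply Cmod_ge_0. unfold pt, D, U, al, bp, ap', be, csubf.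
      pose proof (Tm_diff t phi psi phi' psi' k (Z.of_nat (S n))). pose proof (Tm_diff t phi psi phi' psi' k (- Z.of_nat (S n))%Z). lra. }
    assert (EU : ex_series (pt U)).
    { apply (exs_ext (fun n => pt (fun k1 => al k1 * bp (k - k1)%Z * ker k1 (k - k1)%Z) n + pt (fun k1 => ap' k1 * be (k - k1)%Z * ker k1 (k - k1)%Z) n)).
      intro n; unfold pt, U; ring. apply exs_plus; auto. }
    assert (ED : ex_series (pt (fun j => Cmod (D j)))) by (apply (exs_le _ _ HDU EU)).
    eapply Rle_trans. apply Rmult_le_compat_l. lra. apply zsum_bound; auto.
    assert (Series (pt (fun j => Cmod (D j))) <= Mab al bp k + Mab ap' be k).
    { eapply Rle_trans. apply Series_le; eauto. unfold Mab. rewrite <- Series_plus by auto.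
      right. apply Series_ext. intro n; unfold pt, U; ring. }
    lra.
  - intro k. pose proof (Mab_nonneg al bp k (Hnn _) (Hnn _)). pose proof (Mab_nonneg ap' be k (Hnn _) (Hnn _)). lra.
  - apply (exs_le _ _ Hb). apply exs_plus; auto.
  - eapply Rle_trans. apply (Series_le _ _ Hb). apply exs_plus; auto.
    rewrite Series_plus by auto.
    rewrite !Hs_norm2_eq. fold al bp ap' be.
    eapply Rle_trans. apply Rplus_le_compat; eauto. right; ring.
Qed.

Lemma C0eq : Cminus 0 0 = RtoC 0.
Proof. apply injective_projections; simpl; ring. Qed.

Lemma projQ_small (N : nat) (u : coeffs) j : (Z.abs j <= Z.of_nat N)%Z -> projQ N u j = 0%C.
Proof. intro H. unfold projQ. replace (Z.abs j <=? Z.of_nat N)%Z with true; auto. symmetry; apply Z.leb_le; auto. Qed.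

Lemma projP_cmp (N : nat) (u u' : coeffs) k : Cmod (csubf (projP N u) (projP N u') k) <= Cmod (csubf u u' k).
Proof. unfold csubf, projP. destruct (Z.abs k <=? Z.of_nat N)%Z. lra. rewrite C0eq, Cmod_0. apply Cmod_ge_0. Qed.
Lemma projQ_cmp (N : nat) (u u' : coeffs) k : Cmod (csubf (projQ N u) (projQ N u') k) <= Cmod (csubf u u' k).
Proof. unfold csubf, projQ. destruct (Z.abs k <=? Z.of_nat N)%Z. rewrite C0eq, Cmod_0. apply Cmod_ge_0. lra. Qed.
Lemma projP_cmp1 (N : nat) (u : coeffs) k : Cmod (projP N u k) <= Cmod (u k).
Proof. unfold projP. destruct (Z.abs k <=? Z.of_nat N)%Z. lra. rewrite Cmod_0. apply Cmod_ge_0. Qed.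
Lemma projQ_cmp1 (N : nat) (u : coeffs) k : Cmod (projQ N u k) <= Cmod (u k).
Proof. unfold projQ. destruct (Z.abs k <=? Z.of_nat N)%Z. rewrite Cmod_0. apply Cmod_ge_0. lra. Qed.
Lemma projP_0 (N : nat) (u : coeffs) : u 0%Z = 0%C -> projP N u 0%Z = 0%C.
Proof. intro H. unfold projP. destruct (Z.abs 0 <=? Z.of_nat N)%Z; auto. Qed.
Lemma projQ_0 (N : nat) (u : coeffs) : projQ N u 0%Z = 0%C.
Proof. apply projQ_small. lia. Qed.

Lemma four_bound s (F : coeffs) (m1 m2 m3 m4 : Z -> R) :
  (forall k, 0 <= m1 k) -> (forall k, 0 <= m2 k) -> (forall k, 0 <= m3 k) -> (forall k, 0 <= m4 k) ->
  (forall k, k <> 0%Z -> Cmod (F k) <= m1 k + m2 k + m3 k + m4 k) ->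
  ex_series (pt (sq (fun k => W s k * m1 k))) -> ex_series (pt (sq (fun k => W s k * m2 k))) ->
  ex_series (pt (sq (fun k => W s k * m3 k))) -> ex_series (pt (sq (fun k => W s k * m4 k))) ->
  ex_series (Hs_term s F) /\
  Hs_norm2 s F <= 4 * (Series (pt (sq (fun k => W s k * m1 k))) + Series (pt (sq (fun k => W s k * m2 k)))
                       + Series (pt (sq (fun k => W s k * m3 k))) + Series (pt (sq (fun k => W s k * m4 k)))).
Proof.
  intros P1 P2 P3 P4 HF E1 E2 E3 E4.
  assert (Hp : forall k, k <> 0%Z -> (W s k * Cmod (F k)) ^ 2 <=
     4 * ((W s k * m1 k) ^ 2 + (W s k * m2 k) ^ 2 + (W s k * m3 k) ^ 2 + (W s k * m4 k) ^ 2)).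
  { intros k Hk. pose proof (HF k Hk). pose proof (W_pos s k). pose proof (Cmod_ge_0 (F k)).
    assert ((W s k * Cmod (F k)) ^ 2 <= (W s k * m1 k + W s k * m2 k + W s k * m3 k + W s k * m4 k) ^ 2).
    { apply pow_incr. split. nra. pose proof (P1 k); pose proof (P2 k); pose proof (P3 k); pose proof (P4 k). nra. }
    set (a := W s k * m1 k) in *. set (b := W s k * m2 k) in *. set (c := W s k * m3 k) in *. set (d := W s k * m4 k) in *.
    assert (0 <= (a-b)^2 + (a-c)^2 + (a-d)^2 + (b-c)^2 + (b-d)^2 + (c-d)^2).
    { pose proof (pow2_ge_0 (a-b)). pose proof (pow2_ge_0 (a-c)). pose proof (pow2_ge_0 (a-d)).
      pose proof (pow2_ge_0 (b-c)). pose proof (pow2_ge_0 (b-d)). pose proof (pow2_ge_0 (c-d)). lra. }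
    nra. }
  set (Sb := fun n => 4 * (pt (sq (fun k => W s k * m1 k)) n + pt (sq (fun k => W s k * m2 k)) n
                          + pt (sq (fun k => W s k * m3 k)) n + pt (sq (fun k => W s k * m4 k)) n)).
  assert (Hb : forall n, 0 <= Hs_term s F n <= Sb n).
  { intro n. split. apply Hs_term_nonneg. rewrite Hs_term_eq. unfold Sb, pt, sq.
    pose proof (Hp (Z.of_nat (S n)) ltac:(lia)). pose proof (Hp (- Z.of_nat (S n))%Z ltac:(lia)). lra. }
  assert (ES : ex_series Sb).
  { unfold Sb. apply exs_scal. apply exs_plus; [apply exs_plus; [apply exs_plus|]|]; auto. }
  split. apply (exs_le _ _ Hb ES).
  unfold Hs_norm2. eapply Rle_trans. apply (Series_le _ _ Hb ES).
  unfold Sb. rewrite Series_scal_l. rewrite Series_plus, Series_plus, Series_plus; auto. lra. apply exs_plus; auto. apply exs_plus; [apply exs_plus|]; auto.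
Qed.

Lemma prod_le a b D X : 0 <= a -> 0 <= b -> a <= D -> b <= X -> a * b <= D * X.
Proof. intros. apply Rmult_le_compat; auto. Qed.

Section Main.
Lemma main_bound s (N : nat) t (u v u' v' : coeffs) : 0 <= s -> (1 <= N)%nat ->
  in_Hs s u -> in_Hs s v -> in_Hs s u' -> in_Hs s v' ->
  ex_series (Hs_term s (csubf (B2Q1 N t u v) (B2Q1 N t u' v'))) /\
  ex_series (Hs_term s (csubf (B2Q2 N t u v) (B2Q2 N t u' v'))) /\
  Hs_norm2 s (csubf (B2Q1 N t u v) (B2Q1 N t u' v')) + Hs_norm2 s (csubf (B2Q2 N t u v) (B2Q2 N t u' v'))
   <= 64 * Kc s * / INR N ^ 2 * (Hs_norm2 s (csubf u u') + Hs_norm2 s (csubf v v')) *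
      ((Hs_norm2 s u + Hs_norm2 s v) + (Hs_norm2 s u' + Hs_norm2 s v')).
Proof.
  intros Hs HN [u0 [_ Eu]] [v0 [_ Ev]] [u'0 [_ Eu']] [v'0 [_ Ev']].
  set (Dn := Hs_norm2 s (csubf u u') + Hs_norm2 s (csubf v v')).
  set (X := (Hs_norm2 s u + Hs_norm2 s v) + (Hs_norm2 s u' + Hs_norm2 s v')).
  pose proof (Hs_norm2_nonneg s u). pose proof (Hs_norm2_nonneg s v).
  pose proof (Hs_norm2_nonneg s u'). pose proof (Hs_norm2_nonneg s v').
  pose proof (Hs_norm2_nonneg s (csubf u u')). pose proof (Hs_norm2_nonneg s (csubf v v')).
  assert (HK : 0 <= Kc s * / INR N ^ 2).
  { apply Rmult_le_pos. unfold Kc. apply Rmult_le_pos. apply pow2_ge_0.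
    apply ser_nonneg, pt_nonneg, isq_nonneg. left; apply Rinv_0_lt_compat, pow_lt, lt_0_INR; lia. }
  assert (PP : forall f, ex_series (Hs_term s f) -> ex_series (Hs_term s (projP N f)) /\ Hs_norm2 s (projP N f) <= Hs_norm2 s f)
    by (intros f Ef; apply Hs_cmp; auto; intro; apply projP_cmp1).
  assert (QQ : forall f, ex_series (Hs_term s f) -> ex_series (Hs_term s (projQ N f)) /\ Hs_norm2 s (projQ N f) <= Hs_norm2 s f)
    by (intros f Ef; apply Hs_cmp; auto; intro; apply projQ_cmp1).
  assert (PD : forall f g, ex_series (Hs_term s f) -> ex_series (Hs_term s g) ->
      Hs_norm2 s (csubf (projP N f) (projP N g)) <= Hs_norm2 s (csubf f g))
    by (intros f g Ef Eg; apply Hs_cmp; [intro; apply projP_cmp| apply Hs_sub_ex; auto]).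
  assert (QD : forall f g, ex_series (Hs_term s f) -> ex_series (Hs_term s g) ->
      Hs_norm2 s (csubf (projQ N f) (projQ N g)) <= Hs_norm2 s (csubf f g))
    by (intros f g Ef Eg; apply Hs_cmp; [intro; apply projQ_cmp| apply Hs_sub_ex; auto]).
  destruct (PP u Eu) as [EPu NPu]. destruct (PP v Ev) as [EPv NPv].
  destruct (PP u' Eu') as [EPu' NPu']. destruct (PP v' Ev') as [EPv' NPv'].
  destruct (QQ u Eu) as [EQu NQu]. destruct (QQ v Ev) as [EQv NQv].
  destruct (QQ u' Eu') as [EQu' NQu']. destruct (QQ v' Ev') as [EQv' NQv'].
  pose proof (PD u u' Eu Eu'). pose proof (PD v v' Ev Ev'). pose proof (QD u u' Eu Eu'). pose proof (QD v v' Ev Ev').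
  assert (Hdu : forall f, Hs_norm2 s f <= Hs_norm2 s (csubf u u') -> Hs_norm2 s f <= Dn) by (intros; unfold Dn; lra).
  assert (Hdv : forall f, Hs_norm2 s f <= Hs_norm2 s (csubf v v') -> Hs_norm2 s f <= Dn) by (intros; unfold Dn; lra).
  assert (L : forall f, 0 <= f -> (f <= Hs_norm2 s u \/ f <= Hs_norm2 s v \/ f <= Hs_norm2 s u' \/ f <= Hs_norm2 s v') -> f <= X)
    by (intros f _ [?|[?|[?|?]]]; unfold X; lra).
  assert (Lp : forall a b c d, 0 <= a -> 0 <= b -> 0 <= c -> 0 <= d -> a <= Dn -> b <= X -> c <= X -> d <= Dn ->
            Kc s * / INR N ^ 2 * (a * b + c * d) <= 2 * (Kc s * / INR N ^ 2) * Dn * X).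
  { intros. assert (a * b <= Dn * X) by (apply prod_le; auto). assert (c * d <= X * Dn) by (apply prod_le; auto).
    replace (2 * (Kc s * / INR N ^ 2) * Dn * X) with (Kc s * / INR N ^ 2 * (Dn * X + X * Dn)) by ring.
    apply Rmult_le_compat_l; auto. lra. }
  assert (Pu0 := projP_0 N u u0). assert (Pv0 := projP_0 N v v0).
  assert (Pu'0 := projP_0 N u' u'0). assert (Pv'0 := projP_0 N v' v'0).
  assert (Qu0 := projQ_0 N u). assert (Qv0 := projQ_0 N v). assert (Qu'0 := projQ_0 N u'). assert (Qv'0 := projQ_0 N v').
  assert (N0 := Hs_norm2_nonneg s).
  destruct (B2pair s N t (projP N u) (projQ N v) (projP N u') (projQ N v') Hs HN Pu0 Qv0 Pu'0 Qv'0 EPu EQv EPu' EQv')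
    as [m1 [B1 [P1 [E1 S1]]]].
  { left. intros j Hj. split; apply projQ_small; auto. }
  destruct (B2pair s N t (projQ N u) v (projQ N u') v' Hs HN Qu0 v0 Qu'0 v'0 EQu Ev EQu' Ev')
    as [m2 [B2' [P2 [E2 S2]]]].
  { right. intros j Hj. split; apply projQ_small; auto. }
  destruct (B2pair s N t (projP N u) (projQ N u) (projP N u') (projQ N u') Hs HN Pu0 Qu0 Pu'0 Qu'0 EPu EQu EPu' EQu')
    as [m3 [B3 [P3 [E3 S3]]]].
  { left. intros j Hj. split; apply projQ_small; auto. }
  destruct (B2pair s N t (projQ N u) u (projQ N u') u' Hs HN Qu0 u0 Qu'0 u'0 EQu Eu EQu' Eu')
    as [m4 [B4 [P4 [E4 S4]]]].
  { right. intros j Hj. split; apply projQ_small; auto. }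
  destruct (B2pair s N t (projP N v) (projQ N v) (projP N v') (projQ N v') Hs HN Pv0 Qv0 Pv'0 Qv'0 EPv EQv EPv' EQv')
    as [m5 [B5 [P5 [E5 S5]]]].
  { left. intros j Hj. split; apply projQ_small; auto. }
  destruct (B2pair s N t (projQ N v) v (projQ N v') v' Hs HN Qv0 v0 Qv'0 v'0 EQv Ev EQv' Ev')
    as [m6 [B6 [P6 [E6 S6]]]].
  { right. intros j Hj. split; apply projQ_small; auto. }
  assert (T1 : Series (pt (sq (fun k => W s k * m1 k))) <= 2 * (Kc s * / INR N ^ 2) * Dn * X).
  { eapply Rle_trans. apply S1. apply Lp; try apply N0; [apply Hdu; lra | apply L; [apply N0| first [left; lra | right; left; lra | right; right; left; lra | right; right; right; lra]] | apply L; [apply N0| first [left; lra | right; left; lra | right; right; left; lra | right; right; right; lra]] | apply Hdv; lra]. }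
  assert (T2 : Series (pt (sq (fun k => W s k * m2 k))) <= 2 * (Kc s * / INR N ^ 2) * Dn * X).
  { eapply Rle_trans. apply S2. apply Lp; try apply N0; [apply Hdu; lra | apply L; [apply N0| first [left; lra | right; left; lra | right; right; left; lra | right; right; right; lra]] | apply L; [apply N0| first [left; lra | right; left; lra | right; right; left; lra | right; right; right; lra]] | apply Hdv; lra]. }
  assert (T3 : Series (pt (sq (fun k => W s k * m3 k))) <= 2 * (Kc s * / INR N ^ 2) * Dn * X).
  { eapply Rle_trans. apply S3. apply Lp; try apply N0; [apply Hdu; lra | apply L; [apply N0| first [left; lra | right; left; lra | right; right; left; lra | right; right; right; lra]] | apply L; [apply N0| first [left; lra | right; left; lra | right; right; left; lra | right; right; right; lra]] | apply Hdu; lra]. }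
  assert (T4 : Series (pt (sq (fun k => W s k * m4 k))) <= 2 * (Kc s * / INR N ^ 2) * Dn * X).
  { eapply Rle_trans. apply S4. apply Lp; try apply N0; [apply Hdu; lra | apply L; [apply N0| first [left; lra | right; left; lra | right; right; left; lra | right; right; right; lra]] | apply L; [apply N0| first [left; lra | right; left; lra | right; right; left; lra | right; right; right; lra]] | apply Hdu; lra]. }
  assert (T5 : Series (pt (sq (fun k => W s k * m5 k))) <= 2 * (Kc s * / INR N ^ 2) * Dn * X).
  { eapply Rle_trans. apply S5. apply Lp; try apply N0; [apply Hdv; lra | apply L; [apply N0| first [left; lra | right; left; lra | right; right; left; lra | right; right; right; lra]] | apply L; [apply N0| first [left; lra | right; left; lra | right; right; left; lra | right; right; right; lra]] | apply Hdv; lra]. }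
  assert (T6 : Series (pt (sq (fun k => W s k * m6 k))) <= 2 * (Kc s * / INR N ^ 2) * Dn * X).
  { eapply Rle_trans. apply S6. apply Lp; try apply N0; [apply Hdv; lra | apply L; [apply N0| first [left; lra | right; left; lra | right; right; left; lra | right; right; right; lra]] | apply L; [apply N0| first [left; lra | right; left; lra | right; right; left; lra | right; right; right; lra]] | apply Hdv; lra]. }
  assert (Hc4 : forall a b c d a' b' c' d' : C,
    Cmod (Cminus (Cminus (Cplus a b) (Cplus c d)) (Cminus (Cplus a' b') (Cplus c' d'))) <=
    Cmod (Cminus a a') + Cmod (Cminus b b') + Cmod (Cminus c c') + Cmod (Cminus d d')).
  { intros. replace (Cminus (Cminus (Cplus a b) (Cplus c d)) (Cminus (Cplus a' b') (Cplus c' d')))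
      with (Cplus (Cplus (Cminus a a') (Cminus b b')) (Copp (Cplus (Cminus c c') (Cminus d d'))))
      by (apply injective_projections; simpl; ring).
    eapply Rle_trans. apply Cmod_triangle. rewrite Cmod_opp.
    pose proof (Cmod_triangle (Cminus a a') (Cminus b b')). pose proof (Cmod_triangle (Cminus c c') (Cminus d d')). lra. }
  destruct (four_bound s (csubf (B2Q1 N t u v) (B2Q1 N t u' v')) m1 m2 m3 m4 P1 P2 P3 P4) as [F1 G1]; auto.
  { intros k Hk. unfold csubf at 1, B2Q1, csubf, caddf.
    eapply Rle_trans. apply Hc4. pose proof (B1 k Hk). pose proof (B2' k Hk). pose proof (B3 k Hk). pose proof (B4 k Hk). lra. }
  destruct (four_bound s (csubf (B2Q2 N t u v) (B2Q2 N t u' v')) m1 m2 m5 m6 P1 P2 P5 P6) as [F2 G2]; auto.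
  { intros k Hk. unfold csubf at 1, B2Q2, csubf, caddf.
    eapply Rle_trans. apply Hc4. pose proof (B1 k Hk). pose proof (B2' k Hk). pose proof (B5 k Hk). pose proof (B6 k Hk). lra. }
  split; auto. split; auto.
  fold Dn X. lra.
Qed.
End Main.

Lemma zsum_conj (g : Z -> C) : Cconj (zsum g) = zsum (fun j => Cconj (g j)).
Proof.
  unfold zsum, Cconj. simpl. f_equal. rewrite <- Series_opp. apply Series_ext. intro; simpl; ring.
Qed.

Lemma zsum_swap (g h : Z -> C) : (forall j, h j = g (- j)%Z) -> zsum h = zsum g.
Proof.
  intros H. unfold zsum. f_equal; apply Series_ext; intro n; rewrite !H, Z.opp_involutive; ring.
Qed.

Lemma cexpi_neg x : cexpi (- x) = Cconj (cexpi x).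
Proof. unfold cexpi, Cconj. simpl. rewrite cos_neg, sin_neg. auto. Qed.

Lemma Tm_conj t (phi psi : coeffs) k j :
  (forall i, Cconj (phi i) = phi (- i)%Z) -> (forall i, Cconj (psi i) = psi (- i)%Z) ->
  Cconj (Tm t phi psi k j) = Tm t phi psi (- k)%Z (- j)%Z.
Proof.
  intros Hp Hq. unfold Tm.
  destruct (Z.eqb_spec j k) as [E|E]; destruct (Z.eqb_spec (- j) (- k)) as [E'|E']; try lia.
  - apply injective_projections; simpl; ring.
  - replace (- k - - j)%Z with (- (k - j))%Z by lia.
    rewrite <- Hp, <- Hq. rewrite !opp_IZR.
    replace (3 * - IZR k * - IZR j * - IZR (k - j) * t) with (- (3 * IZR k * IZR j * IZR (k - j) * t)) by ring.
    replace (- IZR j * - IZR (k - j)) with (IZR j * IZR (k - j)) by ring.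
    rewrite cexpi_neg. rewrite !Cmult_conj.
    replace (Cconj (RtoC (/ (IZR j * IZR (k - j))))) with (RtoC (/ (IZR j * IZR (k - j)))) by (apply injective_projections; simpl; ring).
    auto.
Qed.

Lemma B2_conj t (phi psi : coeffs) k :
  (forall i, Cconj (phi i) = phi (- i)%Z) -> (forall i, Cconj (psi i) = psi (- i)%Z) ->
  Cconj (B2 t phi psi k) = B2 t phi psi (- k)%Z.
Proof.
  intros Hp Hq. rewrite !B2_eq.
  destruct (Z.eqb_spec k 0) as [E|E]; destruct (Z.eqb_spec (- k) 0) as [E'|E']; try lia.
  - apply injective_projections; simpl; ring.
  - rewrite Cmult_conj. replace (Cconj (RtoC (1/6))) with (RtoC (1/6)) by (apply injective_projections; simpl; ring).
    f_equal. rewrite zsum_conj. apply zsum_swap. intro j. rewrite Tm_conj by auto. auto.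
Qed.

Lemma projP_conj (N : nat) (u : coeffs) : (forall i, Cconj (u i) = u (- i)%Z) ->
  forall i, Cconj (projP N u i) = projP N u (- i)%Z.
Proof. intros H i. unfold projP. rewrite Z.abs_opp. destruct (Z.abs i <=? Z.of_nat N)%Z; auto. apply injective_projections; simpl; ring. Qed.
Lemma projQ_conj (N : nat) (u : coeffs) : (forall i, Cconj (u i) = u (- i)%Z) ->
  forall i, Cconj (projQ N u i) = projQ N u (- i)%Z.
Proof. intros H i. unfold projQ. rewrite Z.abs_opp. destruct (Z.abs i <=? Z.of_nat N)%Z; auto. apply injective_projections; simpl; ring. Qed.

Lemma B2_at0 t (phi psi : coeffs) : B2 t phi psi 0%Z = 0%C.
Proof. reflexivity. Qed.

Lemma B2Q_in s (N : nat) t (u v : coeffs) : in_Hs s u -> in_Hs s v ->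
  ex_series (Hs_term s (B2Q1 N t u v)) -> ex_series (Hs_term s (B2Q2 N t u v)) ->
  in_Hs s (B2Q1 N t u v) /\ in_Hs s (B2Q2 N t u v).
Proof.
  intros [_ [Cu _]] [_ [Cv _]] E1 E2.
  pose proof (projP_conj N u Cu). pose proof (projQ_conj N u Cu).
  pose proof (projP_conj N v Cv). pose proof (projQ_conj N v Cv).
  split; split; [| split | | split]; auto.
  - unfold B2Q1, csubf, caddf. rewrite !B2_at0. apply injective_projections; simpl; ring.
  - intro k. unfold B2Q1, csubf, caddf. rewrite Cminus_conj, !Cplus_conj, !B2_conj; auto.
  - unfold B2Q2, csubf, caddf. rewrite !B2_at0. apply injective_projections; simpl; ring.
  - intro k. unfold B2Q2, csubf, caddf. rewrite Cminus_conj, !Cplus_conj, !B2_conj; auto.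
Qed.

Definition zc : coeffs := fun _ => 0%C.

Lemma zsum_zero (g : Z -> C) : (forall j, g j = 0%C) -> zsum g = 0%C.
Proof.
  intro H. unfold zsum. apply injective_projections; simpl.
  - rewrite (Series_ext _ (fun n => 0 * 0)). rewrite Series_scal_l. ring. intro; rewrite !H; simpl; ring.
  - rewrite (Series_ext _ (fun n => 0 * 0)). rewrite Series_scal_l. ring. intro; rewrite !H; simpl; ring.
Qed.

Lemma B2_zero t (phi psi : coeffs) k : (forall j, psi j = 0%C) -> B2 t phi psi k = 0%C.
Proof.
  intro H. rewrite B2_eq. destruct (k =? 0)%Z; auto.
  rewrite zsum_zero. apply injective_projections; simpl; ring.
  intro j. unfold Tm. destruct (j =? k)%Z; auto. rewrite H. apply injective_projections; simpl; ring.
Qed.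

Lemma B2Q_zero (N : nat) t k : B2Q1 N t zc zc k = 0%C /\ B2Q2 N t zc zc k = 0%C.
Proof.
  assert (Hp : forall j, projQ N zc j = 0%C) by (intro j; unfold projQ, zc; destruct (Z.abs j <=? Z.of_nat N)%Z; auto).
  assert (Hz : forall j, zc j = 0%C) by auto.
  unfold B2Q1, B2Q2, csubf, caddf. rewrite !(B2_zero t _ _ k Hp), !(B2_zero t _ _ k Hz).
  split; apply injective_projections; simpl; ring.
Qed.

Lemma csubf_z (F : coeffs) k : csubf F zc k = F k.
Proof. unfold csubf, zc. apply injective_projections; simpl; ring. Qed.

Lemma Hs_term_ext s (F G : coeffs) : (forall k, F k = G k) -> forall n, Hs_term s F n = Hs_term s G n.
Proof. intros H n. unfold Hs_term. rewrite !H. auto. Qed.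

Lemma zc_in s : in_Hs s zc.
Proof.
  split; [auto | split].
  - intro; unfold zc; apply injective_projections; simpl; ring.
  - apply (exs_ext (fun n => 0 * pt isq n)). intro n. unfold Hs_term, zc. rewrite Cmod_0. ring.
    apply exs_scal. apply isq_ex.
Qed.

Lemma zc_norm s : Hs_norm2 s zc = 0.
Proof.
  unfold Hs_norm2. rewrite (Series_ext _ (fun n => 0 * 0)). rewrite Series_scal_l. ring.
  intro n. unfold Hs_term, zc. rewrite Cmod_0. ring.
Qed.

Lemma sqrt_bound L c q : 0 <= L -> 0 <= c -> 0 <= q -> L <= c * q ^ 2 -> sqrt L <= sqrt c * q.
Proof.
  intros HL Hc Hq H. apply Rle_trans with (sqrt (c * q ^ 2)). apply sqrt_le_1_alt; auto.
  rewrite sqrt_mult_alt by auto. rewrite sqrt_pow2 by auto. lra.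
Qed.

Theorem lemma6p2 (s : R) (hs : 0 <= s) :
  (forall (N : nat) (t : R) (u v : coeffs),
      (1 <= N)%nat -> in_Hs s u -> in_Hs s v ->
      in_Hs s (B2Q1 N t u v) /\ in_Hs s (B2Q2 N t u v)) /\
  exists Cs : R,
    forall (N : nat) (t : R) (u v u' v' : coeffs),
      (1 <= N)%nat ->
      in_Hs s u -> in_Hs s v -> in_Hs s u' -> in_Hs s v' ->
      Hs2_norm s (B2Q1 N t u v) (B2Q2 N t u v)
        <= Cs * (1 / INR N) * (Hs2_norm s u v) ^ 2 /\
      Hs2_norm s (csubf (B2Q1 N t u v) (B2Q1 N t u' v'))
                 (csubf (B2Q2 N t u v) (B2Q2 N t u' v'))
        <= Cs * (1 / INR N) * Hs2_norm s (csubf u u') (csubf v v')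
           * (Hs2_norm s u v + Hs2_norm s u' v').
Proof.
  assert (Zero : forall (u v : coeffs) (F : coeffs -> coeffs -> coeffs),
     (forall k, F zc zc k = 0%C) ->
     (forall n, Hs_term s (csubf (F u v) (F zc zc)) n = Hs_term s (F u v) n)).
  { intros u v F HF n. apply Hs_term_ext. intro k. unfold csubf. rewrite HF. apply injective_projections; simpl; ring. }
  split.
  - intros N t u v HN Hu Hv.
    destruct (main_bound s N t u v zc zc hs HN Hu Hv (zc_in s) (zc_in s)) as [E1 [E2 _]].
    apply B2Q_in; auto.
    + apply (exs_ext _ _ (Zero u v (B2Q1 N t) (fun k => proj1 (B2Q_zero N t k))) E1).
    + apply (exs_ext _ _ (Zero u v (B2Q2 N t) (fun k => proj2 (B2Q_zero N t k))) E2).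
  - assert (HK : 0 <= Kc s) by (unfold Kc; apply Rmult_le_pos; [apply pow2_ge_0 | apply ser_nonneg, pt_nonneg, isq_nonneg]).
    exists (sqrt (64 * Kc s)). intros N t u v u' v' HN Hu Hv Hu' Hv'.
    assert (HNp : 0 < INR N) by (apply lt_0_INR; lia).
    assert (Hinv : / INR N ^ 2 = (1 / INR N) ^ 2) by (field; lra).
    pose proof (Hs_norm2_nonneg s).
    split.
    + destruct (main_bound s N t u v zc zc hs HN Hu Hv (zc_in s) (zc_in s)) as [E1 [E2 Hb]].
      rewrite !zc_norm in Hb.
      assert (R1 : Hs_norm2 s (csubf (B2Q1 N t u v) (B2Q1 N t zc zc)) = Hs_norm2 s (B2Q1 N t u v))
        by (apply Series_ext; apply (Zero u v (B2Q1 N t) (fun k => proj1 (B2Q_zero N t k)))).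
      assert (R2 : Hs_norm2 s (csubf (B2Q2 N t u v) (B2Q2 N t zc zc)) = Hs_norm2 s (B2Q2 N t u v))
        by (apply Series_ext; apply (Zero u v (B2Q2 N t) (fun k => proj2 (B2Q_zero N t k)))).
      assert (R3 : Hs_norm2 s (csubf u zc) = Hs_norm2 s u) by (apply Series_ext; apply Hs_term_ext; apply csubf_z).
      assert (R4 : Hs_norm2 s (csubf v zc) = Hs_norm2 s v) by (apply Series_ext; apply Hs_term_ext; apply csubf_z).
      rewrite R1, R2, R3, R4 in Hb.
      unfold Hs2_norm. rewrite pow2_sqrt by (pose proof (H u); pose proof (H v); lra).
      rewrite Rmult_assoc. apply sqrt_bound.
      pose proof (H (B2Q1 N t u v)); pose proof (H (B2Q2 N t u v)); lra. lra.
      apply Rmult_le_pos. left; apply Rdiv_lt_0_compat; lra. pose proof (H u); pose proof (H v); lra.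
      eapply Rle_trans. apply Hb. rewrite Hinv. right; ring.
    + destruct (main_bound s N t u v u' v' hs HN Hu Hv Hu' Hv') as [E1 [E2 Hb]].
      unfold Hs2_norm.
      set (X := Hs_norm2 s u + Hs_norm2 s v). set (X' := Hs_norm2 s u' + Hs_norm2 s v').
      set (Dn := Hs_norm2 s (csubf u u') + Hs_norm2 s (csubf v v')).
      fold X X' Dn in Hb.
      assert (0 <= X) by (unfold X; pose proof (H u); pose proof (H v); lra).
      assert (0 <= X') by (unfold X'; pose proof (H u'); pose proof (H v'); lra).
      assert (0 <= Dn) by (unfold Dn; pose proof (H (csubf u u')); pose proof (H (csubf v v')); lra).
      replace (sqrt (64 * Kc s) * (1 / INR N) * sqrt Dn * (sqrt X + sqrt X'))
        with (sqrt (64 * Kc s) * ((1 / INR N) * sqrt Dn * (sqrt X + sqrt X'))) by ring.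
      apply sqrt_bound.
      pose proof (H (csubf (B2Q1 N t u v) (B2Q1 N t u' v'))); pose proof (H (csubf (B2Q2 N t u v) (B2Q2 N t u' v'))); lra. lra.
      apply Rmult_le_pos. apply Rmult_le_pos. left; apply Rdiv_lt_0_compat; lra. apply sqrt_pos.
      pose proof (sqrt_pos X); pose proof (sqrt_pos X'); lra.
      eapply Rle_trans. apply Hb.
      pose proof (sqrt_sqrt X H0). pose proof (sqrt_sqrt X' H1). pose proof (sqrt_sqrt Dn H2) as HDn.
      pose proof (sqrt_pos X); pose proof (sqrt_pos X').
      assert (X + X' <= (sqrt X + sqrt X') ^ 2) by nra.
      replace (64 * Kc s * ((1 / INR N) * sqrt Dn * (sqrt X + sqrt X')) ^ 2)
        with (64 * Kc s * / INR N ^ 2 * Dn * (sqrt X + sqrt X') ^ 2).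
      2:{ rewrite Hinv. transitivity (64 * Kc s * (1/INR N)^2 * (sqrt Dn * sqrt Dn) * (sqrt X + sqrt X')^2). rewrite HDn; auto. ring. }
      apply Rmult_le_compat_l; auto.
      apply Rmult_le_pos. apply Rmult_le_pos. lra. rewrite Hinv; apply pow2_ge_0. auto.
Qed.
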